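(* Let $\lambda>0$, $x>0$, and let $X^*$ and $H$ be as in the context. Then 1. $\displaystyle\lim_{\varepsilon\to1}\mathbb{E}\big[e^{-xX^*}H(x,\varepsilon X^* )\big]=\frac{e^{-2\lambda}}{1-e^{-\lambda}}\exp[\lambda e^{-x}-x]\left\{\exp[\lambda e^{-x}]\,Q_1\!\left(\sqrt{2\lambda e^{-x}},\sqrt{2\lambda e^{-x}}\right)-1\right\}$; 2. $\displaystyle\lim_{\varepsilon\to\infty}\mathbb{E}\big[e^{-xX^*}H(x,\varepsilon X^* )\big]=\frac{e^{-2\lambda}}{1-e^{-\lambda}}\exp[\lambda e^{-x}-x]\left\{\exp[\lambda e^{-x}]-1\right\}$.
   Context: $X^*$ is a random variable with $\mathbb{P}(X^*=k)=e^{-\lambda}\lambda^{k-1}/(k-1)!$, $k=1,2,\ldots$. For $x>0$ and real $s>0$, $H(x,s):=\frac{e^{-\lambda}}{1-e^{-\lambda}}\left\{\frac{\exp[\lambda e^{-x}]\,\Gamma(s,\lambda e^{-x})}{\Gamma(s)}-1\right\}$, with $\Gamma(s,y)=\int_y^\infty t^{s-1}e^{-t}dt$ the upper incomplete gamma function. $Q_\nu(a,b)=a^{1-\nu}\int_b^\infty t^\nu\exp[-(t^2+a^2)/2]\,I_{\nu-1}(at)\,dt$ is the generalized Marcum Q-function of order $\nu$, where $I_\nu$ is the modified Bessel function of the first kind of order $\nu$. *)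

(* Defs.v *)
From Stdlib Require Import Reals Factorial.
From Coquelicot Require Import Coquelicot.
Open Scope R_scope.

Definition upper_gamma (s y : R) : R :=
  RInt_gen (fun t => Rpower t (s - 1) * exp (- t)) (at_point y) (Rbar_locally p_infty).

Definition Gamma_fun (s : R) : R :=
  RInt_gen (fun t => Rpower t (s - 1) * exp (- t)) (at_right 0) (Rbar_locally p_infty).

Definition H (lam x s : R) : R :=
  exp (- lam) / (1 - exp (- lam)) *
  (exp (lam * exp (- x)) * upper_gamma s (lam * exp (- x)) / Gamma_fun s - 1).

Definition BesselI0 (z : R) : R :=
  Series (fun k => (z / 2) ^ (2 * k) / (INR (Factorial.fact k)) ^ 2).

Definition MarcumQ1 (a b : R) : R :=
  RInt_gen (fun t => t * exp (- (t ^ 2 + a ^ 2) / 2) * BesselI0 (a * t))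
           (at_point b) (Rbar_locally p_infty).

Definition pmf_Xstar (lam : R) (k : nat) : R :=
  exp (- lam) * lam ^ (k - 1) / INR (Factorial.fact (k - 1)).

Definition E_Xstar (lam : R) (g : R -> R) : R :=
  Series (fun n => pmf_Xstar lam (S n) * g (INR (S n))).

(* Main.v *)
Require Import Defs.
From Stdlib Require Import Reals Lra Lia Factorial ZArith.
From Coquelicot Require Import Coquelicot.
Open Scope R_scope.

Lemma lim_le_R {T} (F : (T -> Prop) -> Prop) {FF : ProperFilter F} (f g : T -> R) l m :
  F (fun x => f x <= g x) -> filterlim f F (locally l) -> filterlim g F (locally m) -> l <= m.
Proof.
  intros H Hf Hg.
  assert (FF' : ProperFilter' F) by (apply Proper_StrongProper; exact FF).
  exact (filterlim_le (F:=F) f g (Finite l) (Finite m) H Hf Hg).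
Qed.

Lemma filter_finite {T} (F : (T -> Prop) -> Prop) {FF : Filter F} (P : nat -> T -> Prop) :
  (forall n, F (P n)) -> forall N, F (fun x => forall n, (n < N)%nat -> P n x).
Proof.
  intros HP N; induction N.
  - apply filter_forall; intros x n Hn; lia.
  - apply filter_imp with (fun x => (forall n, (n < N)%nat -> P n x) /\ P N x).
    + intros x [H1 H2] n Hn. destruct (Nat.eq_dec n N) as [->|Hne]; auto. apply H1; lia.
    + apply filter_and; auto.
Qed.

Lemma lim_abs_le {T} (F : (T -> Prop) -> Prop) {FF : ProperFilter F} (f : T -> R) l b :
  F (fun x => Rabs (f x) <= b) -> filterlim f F (locally l) -> Rabs l <= b.
Proof.
  intros H Hf.
  apply (lim_le_R F (fun x => Rabs (f x)) (fun _ => b)); auto.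
  - apply (filterlim_comp _ _ _ f Rabs F (locally l) (locally (Rabs l))); auto.
    apply filterlim_Rabs_0 || idtac.
    apply (continuous_Rabs l).
  - apply filterlim_const.
Qed.

Lemma ballR x e y : ball x e y <-> Rabs (y - x) < e.
Proof. split; intro H; exact H. Qed.

Lemma sum_le_const (u : nat -> R) d N : (forall n, (n <= N)%nat -> Rabs (u n) <= d) ->
  Rabs (sum_f_R0 u N) <= INR (S N) * d.
Proof.
  induction N; intros H.
  - simpl. rewrite Rmult_1_l. apply H; lia.
  - simpl sum_f_R0. rewrite S_INR.
    eapply Rle_trans. apply Rabs_triang.
    assert (H1 := IHN (fun n Hn => H n ltac:(lia))). assert (H2 := H (S N) ltac:(lia)). lra.
Qed.

Lemma ex_series_shift (a : nat -> R) N : ex_series a -> ex_series (fun k => a (N + k)%nat).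
Proof. intros H. apply ex_series_incr_n. exact H. Qed.

Lemma series_dct {T} (F : (T -> Prop) -> Prop) {FF : ProperFilter F} (g : T -> nat -> R) (l b : nat -> R) :
  ex_series b -> F (fun e => forall n, Rabs (g e n) <= b n) ->
  (forall n, filterlim (fun e => g e n) F (locally (l n))) ->
  filterlim (fun e => Series (g e)) F (locally (Series l)).
Proof.
  intros Hb Hdom Hlim.
  assert (Hl : forall n, Rabs (l n) <= b n).
  { intro n. apply (lim_abs_le F (fun e => g e n)); auto.
    apply filter_imp with (2 := Hdom). intros e H; apply H. }
  assert (Hexl : ex_series l).
  { apply ex_series_Rabs. apply (@ex_series_le R_AbsRing R_CompleteNormedModule _ b); auto. intro n. rewrite Rabs_Rabsolu. unfold norm; simpl. apply Hl. }
  assert (Hexg : forall e, (forall n, Rabs (g e n) <= b n) -> ex_series (g e)).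
  { intros e He. apply ex_series_Rabs. apply (@ex_series_le R_AbsRing R_CompleteNormedModule _ b); auto. intro n. unfold norm; simpl. rewrite Rabs_Rabsolu. apply He. }
  apply filterlim_locally. intros eps.
  assert (Hcb := Series_correct _ Hb).
  assert (HN : exists N, Series b - sum_f_R0 b N < eps / 4).
  { assert (He4 : 0 < eps / 4) by (destruct eps as [e he]; simpl; lra).
    destruct (proj1 (filterlim_locally _ _) Hcb (mkposreal (eps/4) He4)) as [N HN].
    exists N. specialize (HN N (le_n _)). rewrite sum_n_Reals in HN. change (Rabs (sum_f_R0 b N - Series b) < eps/4) in HN.
    apply Rabs_lt_between in HN. lra. }
  destruct HN as [N HN].
  set (d := eps / (2 * INR (S N))).
  assert (Hd : 0 < d). { unfold d. apply Rdiv_lt_0_compat. apply cond_pos. apply Rmult_lt_0_compat. lra. apply lt_0_INR; lia. }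
  assert (Hfin := filter_finite F (fun n e => Rabs (g e n - l n) < d)
            (fun n => proj1 (filterlim_locally _ _) (Hlim n) (mkposreal d Hd)) (S N)).
  apply filter_imp with (2 := filter_and _ _ Hdom Hfin).
  intros e [He Hf]. apply ballR.
  assert (Hge := Hexg e He).
  rewrite (Series_incr_n (g e) (S N)) by (lia || exact Hge).
  rewrite (Series_incr_n l (S N)) by (lia || exact Hexl).
  rewrite (Series_incr_n b (S N)) in HN by (lia || exact Hb). change (Init.Nat.pred (S N)) with N in *.
  assert (Htb : forall a : nat -> R, (forall n, Rabs (a n) <= b n) -> Rabs (Series (fun k => a (S N + k)%nat)) <= Series (fun k => b (S N + k)%nat)).
  { intros a Ha.
    assert (Hexa : ex_series (fun k => Rabs (a (S N + k)%nat))).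
    { apply (@ex_series_le R_AbsRing R_CompleteNormedModule _ (fun k => b (S N + k)%nat)). intro n; unfold norm; simpl. rewrite Rabs_Rabsolu; apply Ha.
      apply ex_series_shift; auto. }
    eapply Rle_trans. apply Series_Rabs; auto.
    apply Series_le. intro n; split. apply Rabs_pos. apply Ha. apply ex_series_shift; auto. }
  assert (T1 := Htb _ He). assert (T2 := Htb _ Hl).
  assert (Hsum : Rabs (sum_f_R0 (g e) N - sum_f_R0 l N) <= INR (S N) * d).
  { rewrite <- minus_sum. apply sum_le_const. intros n Hn. left. apply Hf. lia. }
  assert (HSd : INR (S N) * d = eps / 2).
  { unfold d. field. apply Rgt_not_eq. apply lt_0_INR; lia. }

  assert (Hab := Rabs_triang (sum_f_R0 (g e) N - sum_f_R0 l N) (Series (fun k => g e (S N + k)%nat) - Series (fun k => l (S N + k)%nat))).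
  assert (Hab2 := Rabs_triang (Series (fun k => g e (S N + k)%nat)) (- Series (fun k => l (S N + k)%nat))).
  rewrite Rabs_Ropp in Hab2.
  replace (sum_f_R0 (g e) N + Series (fun k => g e (S N + k)%nat) - (sum_f_R0 l N + Series (fun k => l (S N + k)%nat)))
    with ((sum_f_R0 (g e) N - sum_f_R0 l N) + (Series (fun k => g e (S N + k)%nat) + - Series (fun k => l (S N + k)%nat))) by ring.
  replace (Series (fun k => g e (S N + k)%nat) - Series (fun k => l (S N + k)%nat)) with (Series (fun k => g e (S N + k)%nat) + - Series (fun k => l (S N + k)%nat)) in Hab by ring.
  lra.
Qed.

Lemma gen_upper (f : R -> R) a (Fb : (R -> Prop) -> Prop) {FFb : Filter Fb} (F : R -> R) l :
  Fb (fun b => is_RInt f a b (F b)) -> filterlim F Fb (locally l) ->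
  is_RInt_gen f (at_point a) Fb l.
Proof.
  intros H1 H2 P HP.
  apply (Filter_prod _ _ _ (fun x => x = a) (fun b => is_RInt f a b (F b) /\ P (F b))).
  - reflexivity.
  - apply filter_and; [exact H1 | exact (H2 P HP)].
  - intros x y Hx [Hy HPy]. subst x. exists (F y). split; auto.
Qed.

Lemma gen_lower (f : R -> R) c (Fa : (R -> Prop) -> Prop) {FFa : Filter Fa} (F : R -> R) l :
  Fa (fun b => is_RInt f b c (F b)) -> filterlim F Fa (locally l) ->
  is_RInt_gen f Fa (at_point c) l.
Proof.
  intros H1 H2 P HP.
  apply (Filter_prod _ _ _ (fun b => is_RInt f b c (F b) /\ P (F b)) (fun x => x = c)).
  - apply filter_and; [exact H1 | exact (H2 P HP)].
  - reflexivity.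
  - intros x y [Hy HPy] Hx. subst y. exists (F x). split; auto.
Qed.

Lemma gen_upper_lim (f : R -> R) a (Fb : (R -> Prop) -> Prop) {FFb : Filter Fb} l :
  is_RInt_gen f (at_point a) Fb l -> Fb (fun b => ex_RInt f a b) ->
  filterlim (fun b => RInt f a b) Fb (locally l).
Proof.
  intros H Hex P HP. destruct (H P HP) as [Q R HQ HR HQR].
  apply filter_imp with (2 := filter_and _ _ HR Hex).
  intros b [Hb Heb]. destruct (HQR a b HQ Hb) as [v [Hv HPv]]. simpl in Hv.
  rewrite (is_RInt_unique _ _ _ _ Hv). exact HPv.
Qed.

Lemma gen_lower_lim (f : R -> R) c (Fa : (R -> Prop) -> Prop) {FFa : Filter Fa} l :
  is_RInt_gen f Fa (at_point c) l -> Fa (fun b => ex_RInt f b c) ->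
  filterlim (fun b => RInt f b c) Fa (locally l).
Proof.
  intros H Hex P HP. destruct (H P HP) as [Q R HQ HR HQR].
  apply filter_imp with (2 := filter_and _ _ HQ Hex).
  intros b [Hb Heb]. destruct (HQR b c Hb HR) as [v [Hv HPv]]. simpl in Hv.
  rewrite (is_RInt_unique _ _ _ _ Hv). exact HPv.
Qed.

Lemma cauchy_dom {T} (Fl : (T -> Prop) -> Prop) {FF : ProperFilter Fl} (F G : T -> R) L :
  filterlim G Fl (locally L) ->
  (exists P, Fl P /\ forall u v, P u -> P v -> Rabs (F u - F v) <= Rabs (G u - G v)) ->
  exists l, filterlim F Fl (locally l).
Proof.
  intros HG [P [HP HPd]].
  apply (filterlim_locally_cauchy (U := R_CompleteSpace)).
  intros eps.
  assert (He2 : 0 < eps / 2) by (destruct eps; simpl; lra).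
  exists (fun u => P u /\ Rabs (G u - L) < eps / 2). split.
  - apply filter_and; auto. apply filter_imp with (2 := proj1 (filterlim_locally _ _) HG (mkposreal _ He2)).
    intros u Hu. exact Hu.
  - intros u v [Pu Gu] [Pv Gv]. change (Rabs (F v - F u) < eps).
    rewrite Rabs_minus_sym. eapply Rle_lt_trans. apply HPd; auto.
    replace (G u - G v) with ((G u - L) - (G v - L)) by ring.
    eapply Rle_lt_trans. apply Rabs_triang. rewrite Rabs_Ropp. lra.
Qed.

Lemma RInt_dom (f g : R -> R) x y : ex_RInt f x y -> ex_RInt g x y ->
  (forall t, Rmin x y <= t <= Rmax x y -> 0 <= f t <= g t) ->
  Rabs (RInt f x y) <= Rabs (RInt g x y).
Proof.
  intros Hf Hg H.
  destruct (Rle_lt_dec x y) as [Hxy|Hxy].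
  - rewrite Rmin_left, Rmax_right in H by lra.
    assert (0 <= RInt f x y) by (apply RInt_ge_0; [lra | auto | intros t Ht; apply H; lra]).
    assert (RInt f x y <= RInt g x y) by (apply RInt_le; [lra | auto | auto | intros t Ht; apply H; lra]).
    rewrite !Rabs_right by lra. lra.
  - rewrite Rmin_right, Rmax_left in H by lra.
    apply ex_RInt_swap in Hf. apply ex_RInt_swap in Hg.
    rewrite <- (opp_RInt_swap f y x Hf), <- (opp_RInt_swap g y x Hg).
    unfold opp; simpl. rewrite !Rabs_Ropp.
    assert (0 <= RInt f y x) by (apply RInt_ge_0; [lra | auto | intros t Ht; apply H; lra]).
    assert (RInt f y x <= RInt g y x) by (apply RInt_le; [lra | auto | auto | intros t Ht; apply H; lra]).
    rewrite !Rabs_right by lra. lra.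
Qed.

Lemma ex_upper (f g : R -> R) a M Lg :
  (forall x y, a <= x -> a <= y -> ex_RInt f x y) ->
  (forall x y, a <= x -> a <= y -> ex_RInt g x y) ->
  (forall t, M <= t -> 0 <= f t <= g t) ->
  filterlim (fun b => RInt g a b) (Rbar_locally p_infty) (locally Lg) ->
  exists l, is_RInt_gen f (at_point a) (Rbar_locally p_infty) l /\
    filterlim (fun b => RInt f a b) (Rbar_locally p_infty) (locally l).
Proof.
  intros Hf Hg Hfg HG.
  destruct (cauchy_dom (Rbar_locally p_infty) (fun b => RInt f a b) (fun b => RInt g a b) Lg HG) as [l Hl].
  { exists (fun b => Rmax a M < b). split. exists (Rmax a M); auto.
    intros u v Hu Hv.
    assert (Ha : a <= u /\ a <= v /\ M <= u /\ M <= v) by (generalize (Rmax_l a M) (Rmax_r a M); lra).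
    assert (E1 : RInt f a v + RInt f v u = RInt f a u) by (apply (RInt_Chasles f a v u); apply Hf; lra).
    assert (E2 : RInt g a v + RInt g v u = RInt g a u) by (apply (RInt_Chasles g a v u); apply Hg; lra).
    replace (RInt f a u - RInt f a v) with (RInt f v u) by lra.
    replace (RInt g a u - RInt g a v) with (RInt g v u) by lra.
    apply RInt_dom; try (apply Hf || apply Hg; lra).
    intros t Ht. apply Hfg. generalize (Rmin_glb u v M); intros. assert (M <= Rmin v u) by (apply Rmin_glb; lra). lra. }
  exists l. split; auto.
  apply (gen_upper f a _ (fun b => RInt f a b)); auto.
  exists a. intros b Hb. apply (@RInt_correct R_CompleteNormedModule). apply Hf; lra.
Qed.

Lemma ex_lower (f g : R -> R) c Lg :
  0 < c ->
  (forall x y, 0 < x -> 0 < y -> ex_RInt f x y) ->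
  (forall x y, 0 < x -> 0 < y -> ex_RInt g x y) ->
  (forall t, 0 < t -> 0 <= f t <= g t) ->
  filterlim (fun b => RInt g b c) (at_right 0) (locally Lg) ->
  exists l, is_RInt_gen f (at_right 0) (at_point c) l /\
    filterlim (fun b => RInt f b c) (at_right 0) (locally l).
Proof.
  intros Hc Hf Hg Hfg HG.
  destruct (cauchy_dom (at_right 0) (fun b => RInt f b c) (fun b => RInt g b c) Lg HG) as [l Hl].
  { exists (fun b => 0 < b). split. exists (mkposreal 1 Rlt_0_1). intros y _ Hy. exact Hy.
    intros u v Hu Hv.
    assert (E1 : RInt f u v + RInt f v c = RInt f u c) by (apply (RInt_Chasles f u v c); apply Hf; lra).
    assert (E2 : RInt g u v + RInt g v c = RInt g u c) by (apply (RInt_Chasles g u v c); apply Hg; lra).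
    replace (RInt f u c - RInt f v c) with (RInt f u v) by lra.
    replace (RInt g u c - RInt g v c) with (RInt g u v) by lra.
    apply RInt_dom; try (apply Hf || apply Hg; lra).
    intros t Ht. apply Hfg. assert (0 < Rmin u v) by (apply Rmin_glb_lt; lra). lra. }
  exists l. split; auto.
  apply (gen_lower f c _ (fun b => RInt f b c)); auto.
  exists (mkposreal c Hc). intros b _ Hb. apply (@RInt_correct R_CompleteNormedModule). apply Hf; lra.
Qed.

Definition fG (s : R) : R -> R := fun t => Rpower t (s - 1) * exp (- t).
Definition Em (m : nat) (u : R) : R := exp (- u) * sum_f_R0 (fun j => u ^ j / INR (fact j)) m.
Definition gp (m : nat) (t : R) : R := t ^ m * exp (- t).

Lemma exd_cont (f : R -> R) x : ex_derive f x -> continuous f x.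
Proof. apply (@ex_derive_continuous R_AbsRing R_NormedModule). Qed.

Lemma cont_mult (f g : R -> R) x : continuous f x -> continuous g x -> continuous (fun t => f t * g t) x.
Proof. intros; apply (@continuous_mult R_UniformSpace R_AbsRing f g x); auto. Qed.

Lemma cont_Rpower a z : 0 < z -> continuous (fun t => Rpower t a) z.
Proof.
  intros Hz. apply exd_cont. exists (a * Rpower z (a - 1)).
  apply is_derive_Reals. apply derivable_pt_lim_power; auto.
Qed.

Lemma cont_expm z : continuous (fun t => exp (- t)) z.
Proof.
  apply exd_cont. exists (exp (- z) * -1). apply is_derive_Reals.
  apply (derivable_pt_lim_comp (fun t => - t) exp). apply derivable_pt_lim_opp, derivable_pt_lim_id.
  apply derivable_pt_lim_exp.
Qed.

Lemma cont_fG s z : 0 < z -> continuous (fG s) z.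
Proof.
  intros Hz. unfold fG. apply cont_mult.
  apply cont_Rpower; auto. apply cont_expm.
Qed.

Lemma cont_gp m z : continuous (gp m) z.
Proof.
  unfold gp. apply cont_mult.
  apply exd_cont. exists (INR m * z ^ (pred m)). apply is_derive_Reals. apply derivable_pt_lim_pow.
  apply cont_expm.
Qed.

Lemma ex_RInt_pos (h : R -> R) : (forall z, 0 < z -> continuous h z) ->
  forall x y, 0 < x -> 0 < y -> ex_RInt h x y.
Proof.
  intros Hc x y Hx Hy. apply (@ex_RInt_continuous R_CompleteNormedModule). intros z Hz. apply Hc.
  assert (0 < Rmin x y) by (apply Rmin_glb_lt; auto). lra.
Qed.

Lemma is_derive_Em m u : is_derive (Em m) u (- gp m u / INR (fact m)).
Proof.
  unfold Em, gp. induction m.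
  - simpl. apply (is_derive_ext (fun u => exp (- u))).
    { intro t. simpl. field. }
    apply is_derive_Reals. replace (- (1 * exp (- u)) / 1) with (exp (- u) * -1) by field.
    apply (derivable_pt_lim_comp (fun t => - t) exp). apply derivable_pt_lim_opp, derivable_pt_lim_id.
    apply derivable_pt_lim_exp.
  - apply (is_derive_ext (fun u => exp (- u) * sum_f_R0 (fun j : nat => u ^ j / INR (fact j)) m + exp (- u) * (u ^ (S m) / INR (fact (S m))))).
    { intro t. simpl sum_f_R0. rewrite Rmult_plus_distr_l. reflexivity. }
    apply is_derive_Reals. apply is_derive_Reals in IHm.
    assert (HD : derivable_pt_lim (fun u => exp (- u) * (u ^ (S m) / INR (fact (S m)))) u
                   (exp (- u) * -1 * (u ^ S m / INR (fact (S m))) + exp (- u) * (INR (S m) * u ^ m / INR (fact (S m))))).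
    { apply (derivable_pt_lim_mult (fun u => exp (- u)) (fun u => u ^ S m / INR (fact (S m)))).
      apply (derivable_pt_lim_comp (fun t => - t) exp). apply derivable_pt_lim_opp, derivable_pt_lim_id.
      apply derivable_pt_lim_exp.
      unfold Rdiv. apply (derivable_pt_lim_scal_right (fun u => u ^ S m)). apply derivable_pt_lim_pow. }
    assert (INR (fact m) <> 0) by (apply INR_fact_neq_0).
    assert (INR (S m) <> 0) by (apply not_0_INR; lia).
    replace (- (u ^ S m * exp (- u)) / INR (fact (S m))) with
      (- (u ^ m * exp (- u)) / INR (fact m) + (exp (- u) * -1 * (u ^ S m / INR (fact (S m))) + exp (- u) * (INR (S m) * u ^ m / INR (fact (S m))))).
    exact (derivable_pt_lim_plus _ _ _ _ _ IHm HD).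
    rewrite fact_simpl, mult_INR. simpl pow. field. auto.
Qed.

Lemma is_RInt_gp m a b : is_RInt (gp m) a b (INR (fact m) * (Em m a - Em m b)).
Proof.
  assert (Hf : INR (fact m) <> 0) by apply INR_fact_neq_0.
  replace (INR (fact m) * (Em m a - Em m b)) with (minus ((fun u => - INR (fact m) * Em m u) b) ((fun u => - INR (fact m) * Em m u) a))
    by (unfold minus, plus, opp; simpl; ring).
  apply (@is_RInt_derive R_CompleteNormedModule (fun u => - INR (fact m) * Em m u)).
  - intros x _. apply is_derive_Reals.
    replace (gp m x) with (- INR (fact m) * (- gp m x / INR (fact m))) by (field; auto).
    apply derivable_pt_lim_scal. apply is_derive_Reals. apply is_derive_Em.
  - intros x _. apply cont_gp.
Qed.


Lemma squeeze0 {T} (F : (T -> Prop) -> Prop) {FF : Filter F} (u v : T -> R) L :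
  F (fun x => Rabs (u x - L) <= v x) -> filterlim v F (locally 0) -> filterlim u F (locally L).
Proof.
  intros H Hv. apply filterlim_locally. intros eps.
  apply filter_imp with (2 := filter_and _ _ H (proj1 (filterlim_locally _ _) Hv eps)).
  intros x [H1 H2]. change (Rabs (u x - L) < eps). change (Rabs (v x - 0) < eps) in H2.
  apply Rabs_lt_between in H2. lra.
Qed.

Lemma lim_C_over C : filterlim (fun b => C / b) (Rbar_locally p_infty) (locally 0).
Proof.
  apply filterlim_locally. intros eps.
  exists (Rmax 1 (Rabs C / eps)). intros b Hb.
  assert (Hb1 : 1 < b) by (generalize (Rmax_l 1 (Rabs C / eps)); lra).
  assert (Hb2 : Rabs C / eps < b) by (generalize (Rmax_r 1 (Rabs C / eps)); lra).
  change (Rabs (C / b - 0) < eps). rewrite Rminus_0_r. unfold Rdiv. rewrite Rabs_mult, Rabs_inv, (Rabs_right b) by lra.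
  destruct eps as [e he]; simpl in *.
  apply (Rmult_lt_reg_r b). lra. rewrite Rmult_assoc, Rinv_l by lra.
  apply (Rmult_lt_compat_r e) in Hb2; auto. unfold Rdiv in Hb2. rewrite Rmult_assoc, Rinv_l in Hb2 by lra. lra.
Qed.

Lemma sum_nonneg (u : nat -> R) N : (forall n, 0 <= u n) -> 0 <= sum_f_R0 u N.
Proof. intros H. apply cond_pos_sum. auto. Qed.

Lemma Em_nonneg m u : 0 <= u -> 0 <= Em m u.
Proof.
  intros Hu. unfold Em. apply Rmult_le_pos. left; apply exp_pos.
  apply sum_nonneg. intro n. apply Rdiv_le_0_compat. apply pow_le; auto. apply lt_0_INR, lt_O_fact.
Qed.

Lemma Em_0 m : Em m 0 = 1.
Proof.
  unfold Em. rewrite Ropp_0, exp_0, Rmult_1_l. induction m; simpl.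
  - field.
  - rewrite IHm. rewrite Rmult_0_l. unfold Rdiv. rewrite Rmult_0_l. ring.
Qed.

Lemma Em_cont m x : continuous (Em m) x.
Proof. apply exd_cont. eexists. apply is_derive_Em. Qed.

Lemma Em_bound m b : 1 <= b -> Em m b <= INR (S m) * INR (fact (S m)) / b.
Proof.
  intros Hb.
  assert (Hf : 0 < INR (fact (S m))) by apply lt_0_INR, lt_O_fact.
  assert (H1 : sum_f_R0 (fun j => b ^ j / INR (fact j)) m <= INR (S m) * b ^ m).
  { eapply Rle_trans. apply Rle_abs. apply sum_le_const. intros n Hn.
    rewrite Rabs_right. 2: { apply Rle_ge, Rdiv_le_0_compat. apply pow_le; lra. apply lt_0_INR, lt_O_fact. }
    assert (1 <= INR (fact n)) by (apply (le_INR 1); apply lt_O_fact).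
    assert (b ^ n <= b ^ m) by (apply Rle_pow; auto).
    assert (0 < b ^ n) by (apply pow_lt; lra).
    apply (Rle_trans _ (b ^ n)). unfold Rdiv. rewrite <- (Rmult_1_r (b ^ n)) at 2.
    apply Rmult_le_compat_l. lra. rewrite <- Rinv_1. apply Rinv_le_contravar; lra. auto. }
  assert (H2 : b ^ S m / INR (fact (S m)) <= exp b).
  { eapply Rle_trans. 2: apply (exp_ge_taylor b (S m)); lra.
    replace (sum_f_R0 (fun k => b^k/INR (fact k)) (S m)) with (sum_f_R0 (fun k => b^k/INR(fact k)) m + b^(S m)/INR (fact (S m))) by reflexivity.
    assert (0 <= sum_f_R0 (fun k => b ^ k / INR (fact k)) m).
    { apply sum_nonneg. intro n. apply Rdiv_le_0_compat. apply pow_le; lra. apply lt_0_INR, lt_O_fact. }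
    lra. }
  unfold Em. rewrite exp_Ropp.
  assert (Hbm : 0 < b ^ m) by (apply pow_lt; lra).
  assert (He : 0 < exp b) by apply exp_pos.
  apply (Rle_trans _ (/ exp b * (INR (S m) * b ^ m))).
  apply Rmult_le_compat_l. left; apply Rinv_0_lt_compat; auto. auto.
  simpl pow in H2.
  apply (Rmult_le_reg_r (exp b * b)). nra.
  replace (/ exp b * (INR (S m) * b ^ m) * (exp b * b)) with (INR (S m) * (b * b ^ m)) by (field; lra).
  replace (INR (S m) * INR (fact (S m)) / b * (exp b * b)) with (INR (S m) * (INR (fact (S m)) * exp b)) by (field; lra).
  apply Rmult_le_compat_l. apply pos_INR.
  apply (Rmult_le_reg_r (/ INR (fact (S m)))). apply Rinv_0_lt_compat; auto.
  replace (INR (fact (S m)) * exp b * / INR (fact (S m))) with (exp b) by (field; lra). exact H2.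
Qed.

Lemma Em_lim m : filterlim (Em m) (Rbar_locally p_infty) (locally 0).
Proof.
  apply (squeeze0 _ (Em m) (fun b => INR (S m) * INR (fact (S m)) / b)).
  - exists 1. intros b Hb. rewrite Rminus_0_r, Rabs_right. apply Em_bound; lra.
    apply Rle_ge, Em_nonneg; lra.
  - apply lim_C_over.
Qed.

Lemma Em_lim0 m : filterlim (Em m) (at_right 0) (locally 1).
Proof.
  rewrite <- (Em_0 m). apply (filterlim_filter_le_1 (F := locally 0)).
  intros P HP. destruct HP as [e He]. exists e. intros y Hy _. apply He, Hy.
  apply Em_cont.
Qed.

Definition lg (s c : R) : R := RInt_gen (fG s) (at_right 0) (at_point c).

Lemma Rpower_pos x a : 0 < Rpower x a.
Proof. unfold Rpower. apply exp_pos. Qed.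

Lemma Rpower_lim0 s : 0 < s -> filterlim (fun b => Rpower b s) (at_right 0) (locally 0).
Proof.
  intros Hs. apply filterlim_locally. intros eps.
  assert (Hd : 0 < Rpower eps (/ s)) by apply Rpower_pos.
  exists (mkposreal _ Hd). intros b Hb Hb0. simpl in Hb.
  change (Rabs (b - 0) < Rpower eps (/ s)) in Hb.
  rewrite Rminus_0_r, Rabs_right in Hb by lra.
  change (Rabs (Rpower b s - 0) < eps). rewrite Rminus_0_r, Rabs_right by (apply Rle_ge; left; apply Rpower_pos).
  replace (pos eps) with (Rpower (Rpower eps (/ s)) s).
  apply Rlt_Rpower_l; auto.
  rewrite Rpower_mult, Rinv_l by lra. apply Rpower_1. apply cond_pos.
Qed.

Lemma lim_affine {T} (F : (T -> Prop) -> Prop) {FF : Filter F} (f : T -> R) l a c :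
  filterlim f F (locally l) -> filterlim (fun x => a + c * f x) F (locally (a + c * l)).
Proof.
  intros H. apply (filterlim_comp _ _ _ f (fun u => a + c * u) F (locally l)); auto.
  apply (exd_cont (fun u => a + c * u) l). exists (0 + c * 1). apply is_derive_Reals.
  apply (derivable_pt_lim_plus (fun _ => a) (fun u => c * u)). apply derivable_pt_lim_const.
  apply derivable_pt_lim_scal. apply derivable_pt_lim_id.
Qed.

Lemma nat_above s : exists n : nat, s <= INR n.
Proof.
  destruct (archimed s) as [H1 _].
  destruct (Z_le_gt_dec 0 (up s)) as [Hz|Hz].
  - exists (Z.to_nat (up s)). rewrite INR_IZR_INZ, Z2Nat.id by auto. lra.
  - exists 0%nat. simpl. assert (Hz2 : (up s < 0)%Z) by lia. apply IZR_lt in Hz2. lra.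
Qed.

Lemma ug_spec s z : 0 < s -> 0 < z ->
  is_RInt_gen (fG s) (at_point z) (Rbar_locally p_infty) (upper_gamma s z) /\
  filterlim (fun b => RInt (fG s) z b) (Rbar_locally p_infty) (locally (upper_gamma s z)).
Proof.
  intros Hs Hz. destruct (nat_above s) as [n Hn].
  destruct (ex_upper (fG s) (gp n) z 1 (INR (fact n) * Em n z)) as [l [Hl1 Hl2]].
  - intros x y Hx Hy. apply ex_RInt_pos; try lra. intros; apply cont_fG; auto.
  - intros x y Hx Hy. apply (@ex_RInt_continuous R_CompleteNormedModule). intros; apply cont_gp.
  - intros t Ht. unfold fG, gp. split.
    + apply Rmult_le_pos; left. apply Rpower_pos. apply exp_pos.
    + apply Rmult_le_compat_r. left; apply exp_pos.
      rewrite <- Rpower_pow by lra. apply Rle_Rpower; lra.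
  - apply (filterlim_ext (fun b => INR (fact n) * Em n z + (- INR (fact n)) * Em n b)).
    { intro b. rewrite (is_RInt_unique _ _ _ _ (is_RInt_gp n z b)). ring. }
    assert (Hlim := lim_affine _ (Em n) 0 (INR (fact n) * Em n z) (- INR (fact n)) (Em_lim n)).
    rewrite Rmult_0_r, Rplus_0_r in Hlim. exact Hlim.
  - assert (E : upper_gamma s z = l) by (apply (is_RInt_gen_unique (fG s)); auto).
    rewrite E. auto.
Qed.

Lemma is_RInt_pw s b c : 0 < s -> 0 < b -> 0 < c ->
  is_RInt (fun t => Rpower t (s - 1)) b c ((Rpower c s - Rpower b s) / s).
Proof.
  intros Hs Hb Hc.
  replace ((Rpower c s - Rpower b s) / s) with (minus ((fun t => Rpower t s / s) c) ((fun t => Rpower t s / s) b))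
    by (unfold minus, plus, opp; simpl; field; lra).
  apply (@is_RInt_derive R_CompleteNormedModule (fun t => Rpower t s / s)).
  - intros x Hx. assert (0 < x) by (assert (0 < Rmin b c) by (apply Rmin_glb_lt; auto); lra).
    apply is_derive_Reals. unfold Rdiv.
    replace (Rpower x (s - 1)) with (s * Rpower x (s - 1) * / s) by (field; lra).
    apply (derivable_pt_lim_scal_right (fun t => Rpower t s)). apply derivable_pt_lim_power; auto.
  - intros x Hx. apply cont_Rpower. assert (0 < Rmin b c) by (apply Rmin_glb_lt; auto); lra.
Qed.

Lemma lg_spec s c : 0 < s -> 0 < c ->
  is_RInt_gen (fG s) (at_right 0) (at_point c) (lg s c) /\
  filterlim (fun b => RInt (fG s) b c) (at_right 0) (locally (lg s c)).
Proof.
  intros Hs Hc.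
  destruct (ex_lower (fG s) (fun t => Rpower t (s - 1)) c (Rpower c s / s)) as [l [Hl1 Hl2]]; auto.
  - apply ex_RInt_pos. intros; apply cont_fG; auto.
  - apply ex_RInt_pos. intros; apply cont_Rpower; auto.
  - intros t Ht. unfold fG. split.
    + apply Rmult_le_pos; left. apply Rpower_pos. apply exp_pos.
    + rewrite <- (Rmult_1_r (Rpower t (s - 1))) at 2. apply Rmult_le_compat_l. left; apply Rpower_pos.
      rewrite <- exp_0. left; apply exp_increasing; lra.
  - apply (filterlim_ext_loc (fun b => Rpower c s / s + (- / s) * Rpower b s)).
    { exists (mkposreal c Hc). intros b Hb Hb0. rewrite (is_RInt_unique _ _ _ _ (is_RInt_pw s b c Hs Hb0 Hc)). field. lra. }
    assert (Hlim := lim_affine _ (fun b => Rpower b s) 0 (Rpower c s / s) (- / s) (Rpower_lim0 s Hs)).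
    rewrite Rmult_0_r, Rplus_0_r in Hlim. exact Hlim.
  - assert (E : lg s c = l) by (apply (is_RInt_gen_unique (fG s)); auto).
    rewrite E. auto.
Qed.

Lemma Gamma_split s z : 0 < s -> 0 < z -> Gamma_fun s = lg s z + upper_gamma s z.
Proof.
  intros Hs Hz. destruct (ug_spec s z Hs Hz) as [H1 _]. destruct (lg_spec s z Hs Hz) as [H2 _].
  apply (is_RInt_gen_unique (fG s)).
  apply (is_RInt_gen_Chasles (fG s) z); auto.
Qed.

Lemma lim_unique_R {T} (F : (T -> Prop) -> Prop) {FF : ProperFilter F} (f : T -> R) l m :
  filterlim f F (locally l) -> filterlim f F (locally m) -> l = m.
Proof.
  intros H1 H2. apply Rle_antisym.
  apply (lim_le_R F f f); auto. apply filter_forall; intros; lra.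
  apply (lim_le_R F f f); auto. apply filter_forall; intros; lra.
Qed.

Lemma fG_int m t : 0 < t -> fG (INR (S m)) t = gp m t.
Proof.
  intros Ht. unfold fG, gp. rewrite S_INR. replace (INR m + 1 - 1) with (INR m) by ring.
  rewrite Rpower_pow; auto.
Qed.

Lemma ug_int m z : 0 < z -> upper_gamma (INR (S m)) z = INR (fact m) * Em m z.
Proof.
  intros Hz. assert (Hs : 0 < INR (S m)) by (apply lt_0_INR; lia).
  destruct (ug_spec _ z Hs Hz) as [_ H].
  apply (lim_unique_R (Rbar_locally p_infty) _ _ _ H).
  apply (filterlim_ext_loc (fun b => INR (fact m) * Em m z + (- INR (fact m)) * Em m b)).
  { exists z. intros b Hb. rewrite (RInt_ext _ (gp m)).
    rewrite (is_RInt_unique _ _ _ _ (is_RInt_gp m z b)). ring.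
    intros x Hx. rewrite Rmin_left in Hx by lra. apply fG_int. lra. }
  assert (Hlim := lim_affine _ (Em m) 0 (INR (fact m) * Em m z) (- INR (fact m)) (Em_lim m)).
  rewrite Rmult_0_r, Rplus_0_r in Hlim. exact Hlim.
Qed.

Lemma lg_int m c : 0 < c -> lg (INR (S m)) c = INR (fact m) * (1 - Em m c).
Proof.
  intros Hc. assert (Hs : 0 < INR (S m)) by (apply lt_0_INR; lia).
  destruct (lg_spec _ c Hs Hc) as [_ H].
  apply (lim_unique_R (at_right 0) _ _ _ H).
  apply (filterlim_ext_loc (fun b => (- INR (fact m) * Em m c) + INR (fact m) * Em m b)).
  { exists (mkposreal c Hc). intros b Hb Hb0. rewrite (RInt_ext _ (gp m)).
    rewrite (is_RInt_unique _ _ _ _ (is_RInt_gp m b c)). ring.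
    intros x Hx. assert (0 < Rmin b c) by (apply Rmin_glb_lt; auto). apply fG_int. lra. }
  assert (Hlim := lim_affine _ (Em m) 1 (- INR (fact m) * Em m c) (INR (fact m)) (Em_lim0 m)).
  replace (INR (fact m) * (1 - Em m c)) with (- INR (fact m) * Em m c + INR (fact m) * 1) by ring. exact Hlim.
Qed.

Lemma Gamma_int m : Gamma_fun (INR (S m)) = INR (fact m).
Proof.
  assert (Hs : 0 < INR (S m)) by (apply lt_0_INR; lia).
  rewrite (Gamma_split _ 1 Hs Rlt_0_1), ug_int, lg_int by lra. ring.
Qed.

Lemma fG_pos s t : 0 < fG s t.
Proof. unfold fG. apply Rmult_lt_0_compat. apply Rpower_pos. apply exp_pos. Qed.

Lemma exRI s x y : 0 < x -> 0 < y -> ex_RInt (fG s) x y.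
Proof. intros. apply ex_RInt_pos; auto. intros; apply cont_fG; auto. Qed.

Lemma lg_nonneg s c : 0 < s -> 0 < c -> 0 <= lg s c.
Proof.
  intros Hs Hc. destruct (lg_spec s c Hs Hc) as [_ H].
  apply (lim_le_R (at_right 0) (fun _ => 0) (fun b => RInt (fG s) b c)); auto.
  exists (mkposreal c Hc). intros b Hb Hb0. simpl in Hb. change (Rabs (b - 0) < c) in Hb.
  rewrite Rminus_0_r, Rabs_right in Hb by lra.
  apply RInt_ge_0. lra. apply exRI; lra. intros; left; apply fG_pos.
  apply filterlim_const.
Qed.

Lemma ug_ge s z w : 0 < s -> 0 < z -> z <= w -> RInt (fG s) z w <= upper_gamma s z.
Proof.
  intros Hs Hz Hw. destruct (ug_spec s z Hs Hz) as [_ H].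
  apply (lim_le_R (Rbar_locally p_infty) (fun _ => RInt (fG s) z w) (fun b => RInt (fG s) z b)); auto.
  exists w. intros b Hb.
  rewrite <- (RInt_Chasles (fG s) z w b) by (apply exRI; lra).
  assert (0 <= RInt (fG s) w b). apply RInt_ge_0. lra. apply exRI; lra. intros; left; apply fG_pos.
  unfold plus; simpl. lra.
  apply filterlim_const.
Qed.

Lemma ug_pos s z : 0 < s -> 0 < z -> 0 < upper_gamma s z.
Proof.
  intros Hs Hz. eapply Rlt_le_trans. 2: apply (ug_ge s z (z + 1)); lra.
  apply RInt_gt_0. lra. intros; apply fG_pos. intros x Hx; apply cont_fG; lra.
Qed.

Lemma Gamma_pos s : 0 < s -> 0 < Gamma_fun s.
Proof.
  intros Hs. rewrite (Gamma_split s 1 Hs Rlt_0_1).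
  generalize (lg_nonneg s 1 Hs Rlt_0_1) (ug_pos s 1 Hs Rlt_0_1). lra.
Qed.

Lemma lg_le s y : 1 <= s -> 0 < y -> lg s y <= Rpower y s / s.
Proof.
  intros Hs Hy. destruct (lg_spec s y ltac:(lra) Hy) as [_ H].
  apply (lim_le_R (at_right 0) (fun b => RInt (fG s) b y) (fun b => (Rpower y s - Rpower b s) / s)); auto.
  - exists (mkposreal y Hy). intros b Hb Hb0. simpl in Hb. change (Rabs (b - 0) < y) in Hb.
    rewrite Rminus_0_r, Rabs_right in Hb by lra.
    rewrite <- (is_RInt_unique _ _ _ _ (is_RInt_pw s b y ltac:(lra) Hb0 Hy)).
    apply RInt_le. lra. apply exRI; lra. apply ex_RInt_pos; auto. intros; apply cont_Rpower; auto.
    intros t Ht. unfold fG. rewrite <- (Rmult_1_r (Rpower t (s - 1))) at 2. apply Rmult_le_compat_l. left; apply Rpower_pos.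
    rewrite <- exp_0. left; apply exp_increasing; lra.
  - assert (Hlim := lim_affine (at_right 0) (fun b => Rpower b s) 0 (Rpower y s / s) (- / s) (Rpower_lim0 s ltac:(lra))).
    rewrite Rmult_0_r, Rplus_0_r in Hlim.
    eapply filterlim_ext; [|exact Hlim]. intro b. simpl. field. lra.
Qed.

Lemma ug_low s y : 1 <= s -> 0 < y -> Rpower (y + 1) (s - 1) * exp (- (y + 2)) <= upper_gamma s y.
Proof.
  intros Hs Hy. eapply Rle_trans. 2: apply (ug_ge s y (y + 2)); lra.
  rewrite <- (RInt_Chasles (fG s) y (y + 1) (y + 2)) by (apply exRI; lra).
  assert (0 <= RInt (fG s) y (y + 1)). apply RInt_ge_0. lra. apply exRI; lra. intros; left; apply fG_pos.
  assert (Rpower (y + 1) (s - 1) * exp (- (y + 2)) <= RInt (fG s) (y + 1) (y + 2)).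
  { replace (Rpower (y + 1) (s - 1) * exp (- (y + 2))) with (RInt (fun _ => Rpower (y + 1) (s - 1) * exp (- (y + 2))) (y + 1) (y + 2)).
    apply RInt_le. lra. apply ex_RInt_const. apply exRI; lra.
    intros t Ht. unfold fG. apply Rmult_le_compat. left; apply Rpower_pos. left; apply exp_pos.
    apply Rle_Rpower_l; lra. left; apply exp_increasing; lra.
    rewrite RInt_const. unfold scal; simpl; unfold mult; simpl. ring. }
  unfold plus; simpl. lra.
Qed.

Lemma lim_minus {T} (F : (T -> Prop) -> Prop) {FF : Filter F} (f g : T -> R) a b :
  filterlim f F (locally a) -> filterlim g F (locally b) -> filterlim (fun x => f x - g x) F (locally (a - b)).
Proof.
  intros Hf Hg. apply filterlim_locally. intros eps.
  assert (He : 0 < eps / 2) by (destruct eps; simpl; lra).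
  apply filter_imp with (2 := filter_and _ _ (proj1 (filterlim_locally _ _) Hf (mkposreal _ He)) (proj1 (filterlim_locally _ _) Hg (mkposreal _ He))).
  intros x [H1 H2]. change (Rabs (f x - a) < eps / 2) in H1. change (Rabs (g x - b) < eps / 2) in H2.
  change (Rabs (f x - g x - (a - b)) < eps).
  apply Rabs_lt_between in H1. apply Rabs_lt_between in H2. apply Rabs_lt_between. lra.
Qed.

Lemma ln_lt_self t : 0 < t -> ln t < t.
Proof.
  intros Ht. rewrite <- (ln_exp t) at 2. apply ln_increasing; auto.
  generalize (exp_ineq1_le t). intros. destruct (Req_dec t 0). subst. rewrite exp_0; lra.
  generalize (exp_ineq1 t H0). lra.
Qed.

Lemma abs_ln_le t : 0 < t -> Rabs (ln t) <= t + / t.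
Proof.
  intros Ht. assert (0 < / t) by (apply Rinv_0_lt_compat; auto).
  assert (H1 := ln_lt_self t Ht). assert (H2 := ln_lt_self (/ t) H). rewrite ln_Rinv in H2 by auto.
  unfold Rabs. destruct (Rcase_abs (ln t)); lra.
Qed.

Lemma exp_abs_ln_le t : 0 < t -> exp (Rabs (ln t)) <= t + / t.
Proof.
  intros Ht. assert (0 < / t) by (apply Rinv_0_lt_compat; auto).
  unfold Rabs. destruct (Rcase_abs (ln t)).
  - rewrite <- ln_Rinv, exp_ln by auto. lra.
  - rewrite exp_ln by auto. lra.
Qed.

Lemma exp_m1_le u : Rabs (exp u - 1) <= Rabs u * exp (Rabs u).
Proof.
  destruct (Rle_dec 0 u) as [Hu|Hu].
  - rewrite (Rabs_right u) by lra.
    assert (H1 : 1 <= exp u) by (rewrite <- exp_0; destruct Hu as [Hu|Hu]; [left; apply exp_increasing; auto | subst; lra]).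
    rewrite Rabs_right by lra.
    assert (H := exp_ineq1_le (- u)). assert (He := exp_pos u).
    assert (exp (- u) * exp u = 1) by (rewrite <- exp_plus; replace (- u + u) with 0 by ring; apply exp_0).
    nra.
  - rewrite (Rabs_left u) by lra.
    assert (H1 : exp u <= 1) by (rewrite <- exp_0; left; apply exp_increasing; lra).
    rewrite Rabs_left1 by lra.
    assert (H := exp_ineq1_le u). assert (1 <= exp (- u)) by (rewrite <- exp_0; left; apply exp_increasing; lra).
    nra.
Qed.

Lemma Rpower_m1_le t d : 0 < t -> Rabs d <= 1 -> Rabs (Rpower t d - 1) <= Rabs d * (t + / t) ^ 2.
Proof.
  intros Ht Hd. unfold Rpower.
  eapply Rle_trans. apply exp_m1_le.
  assert (Hl := abs_ln_le t Ht). assert (He := exp_abs_ln_le t Ht).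
  rewrite Rabs_mult.
  assert (Hu : Rabs d * Rabs (ln t) <= Rabs (ln t)) by (generalize (Rabs_pos (ln t)); nra).
  assert (exp (Rabs d * Rabs (ln t)) <= exp (Rabs (ln t))).
  { destruct Hu as [Hu|Hu]. left; apply exp_increasing; auto. rewrite Hu; lra. }
  assert (0 < / t) by (apply Rinv_0_lt_compat; auto).
  generalize (Rabs_pos d) (Rabs_pos (ln t)) (exp_pos (Rabs d * Rabs (ln t))). intros.
  replace ((t + / t) ^ 2) with ((t + / t) * (t + / t)) by ring.
  apply (Rle_trans _ (Rabs d * Rabs (ln t) * (t + / t))).
  apply Rmult_le_compat_l. nra. lra.
  rewrite Rmult_assoc. apply Rmult_le_compat_l. auto. apply Rmult_le_compat_r. lra. auto.
Qed.

Lemma is_RInt_lin (f g : R -> R) a b If Ig c1 c2 : is_RInt f a b If -> is_RInt g a b Ig ->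
  is_RInt (fun t => c1 * f t + c2 * g t) a b (c1 * If + c2 * Ig).
Proof.
  intros Hf Hg.
  apply (@is_RInt_plus R_NormedModule (fun t => c1 * f t) (fun t => c2 * g t) a b (c1 * If) (c2 * Ig)).
  apply (@is_RInt_scal R_NormedModule f a b c1 If Hf).
  apply (@is_RInt_scal R_NormedModule g a b c2 Ig Hg).
Qed.

Lemma fG_diff_bound m s z t : 0 < z -> z <= t -> Rabs (s - INR (S m)) <= 1 ->
  Rabs (fG s t - fG (INR (S m)) t) <= Rabs (s - INR (S m)) * (2 * gp (S (S m)) t + 2 * (/ z) ^ 2 * gp m t).
Proof.
  intros Hz Hzt Hd. assert (Ht : 0 < t) by lra.
  rewrite fG_int by auto.
  set (d := s - INR (S m)) in *.
  assert (E : fG s t = t ^ m * Rpower t d * exp (- t)).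
  { unfold fG. replace (s - 1) with (INR m + d) by (unfold d; rewrite S_INR; ring).
    rewrite Rpower_plus, Rpower_pow by auto. ring. }
  rewrite E. unfold gp.
  replace (t ^ m * Rpower t d * exp (- t) - t ^ m * exp (- t)) with ((t ^ m * exp (- t)) * (Rpower t d - 1)) by ring.
  rewrite Rabs_mult, (Rabs_right (t ^ m * exp (- t))).
  2: { apply Rle_ge, Rmult_le_pos. apply pow_le; lra. left; apply exp_pos. }
  assert (Hp : 0 <= t ^ m * exp (- t)) by (apply Rmult_le_pos; [apply pow_le; lra | left; apply exp_pos]).
  eapply Rle_trans. apply Rmult_le_compat_l. exact Hp. apply Rpower_m1_le; auto.
  assert (Hw : 0 < / t) by (apply Rinv_0_lt_compat; auto).
  assert (Hwz : / t <= / z) by (apply Rinv_le_contravar; auto).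
  assert (Htw : t * / t = 1) by (field; lra).
  assert (K : (t + / t) ^ 2 <= 2 * t ^ 2 + 2 * (/ z) ^ 2).
  { assert (0 <= (t - / t) ^ 2) by apply pow2_ge_0.
    assert ((/ t) ^ 2 <= (/ z) ^ 2) by (apply pow_incr; lra). nra. }
  replace (2 * (t ^ S (S m) * exp (- t)) + 2 * (/ z) ^ 2 * (t ^ m * exp (- t))) with ((t ^ m * exp (- t)) * (2 * t ^ 2 + 2 * (/ z) ^ 2)) by (simpl; ring).
  generalize (Rabs_pos d). intros. 
  rewrite <- Rmult_assoc, (Rmult_comm (t ^ m * exp (- t)) (Rabs d)), Rmult_assoc.
  apply Rmult_le_compat_l. auto. apply Rmult_le_compat_l; auto.
Qed.

Definition Cug (m : nat) (z : R) := 2 * (INR (fact (S (S m))) * Em (S (S m)) z) + 2 * (/ z) ^ 2 * (INR (fact m) * Em m z).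

Lemma ug_lip m z s : 0 < z -> Rabs (s - INR (S m)) <= / 2 ->
  Rabs (upper_gamma s z - upper_gamma (INR (S m)) z) <= Rabs (s - INR (S m)) * Cug m z.
Proof.
  intros Hz Hd. assert (Hk : 1 <= INR (S m)) by (rewrite S_INR; generalize (pos_INR m); lra).
  assert (Hs : 0 < s) by (apply Rabs_le_between in Hd; lra).
  destruct (ug_spec s z Hs Hz) as [_ H1]. destruct (ug_spec (INR (S m)) z ltac:(lra) Hz) as [_ H2].
  assert (H := lim_minus _ _ _ _ _ H1 H2).
  apply (lim_abs_le (Rbar_locally p_infty) (fun b => RInt (fG s) z b - RInt (fG (INR (S m))) z b)); [|exact H].
  exists z. intros b Hb.
  assert (E : RInt (fun t => fG s t - fG (INR (S m)) t) z b = RInt (fG s) z b - RInt (fG (INR (S m))) z b).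
  { apply is_RInt_unique. apply (@is_RInt_minus R_NormedModule (fG s) (fG (INR (S m))) z b).
    apply (RInt_correct (V:=R_CompleteNormedModule)); apply exRI; lra.
    apply (RInt_correct (V:=R_CompleteNormedModule)); apply exRI; lra. }
  rewrite <- E.
  set (c := Rabs (s - INR (S m))).
  assert (HI := is_RInt_lin _ _ z b _ _ (c * 2) (c * (2 * (/ z) ^ 2)) (is_RInt_gp (S (S m)) z b) (is_RInt_gp m z b)).
  assert (Hex : ex_RInt (fun t => fG s t - fG (INR (S m)) t) z b) by (apply (@ex_RInt_minus R_NormedModule); apply exRI; lra).
  eapply Rle_trans.
  apply (norm_RInt_le (fun t => fG s t - fG (INR (S m)) t) _ z b _ _ ltac:(lra)) with (2 := RInt_correct _ _ _ Hex) (3 := HI).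
  - intros t Ht. change (Rabs (fG s t - fG (INR (S m)) t) <= c * 2 * gp (S (S m)) t + c * (2 * (/ z) ^ 2) * gp m t).
    eapply Rle_trans. apply (fG_diff_bound m s z t); auto. lra. unfold c in *; lra. unfold c. right; ring.
  - unfold Cug.
    assert (0 <= Em (S (S m)) b) by (apply Em_nonneg; lra). assert (0 <= Em m b) by (apply Em_nonneg; lra).
    assert (0 <= INR (fact (S (S m)))) by apply pos_INR. assert (0 <= INR (fact m)) by apply pos_INR.
    assert (0 <= c) by apply Rabs_pos. assert (0 <= (/ z) ^ 2) by apply pow2_ge_0.
    assert (0 <= c * INR (fact (S (S m))) * Em (S (S m)) b) by (apply Rmult_le_pos; [apply Rmult_le_pos|]; auto).
    assert (0 <= c * (/ z) ^ 2 * INR (fact m) * Em m b) by (apply Rmult_le_pos; [apply Rmult_le_pos; [apply Rmult_le_pos|]|]; auto).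
    nra.
Qed.

Lemma Rpower_1_base a : Rpower 1 a = 1.
Proof. unfold Rpower. rewrite ln_1, Rmult_0_r. apply exp_0. Qed.

Lemma lim_rabs {T} (F : (T -> Prop) -> Prop) {FF : Filter F} (f : T -> R) l :
  filterlim f F (locally l) -> filterlim (fun x => Rabs (f x)) F (locally (Rabs l)).
Proof. intros H. apply (filterlim_comp _ _ _ f Rabs F (locally l)); auto. apply continuous_Rabs. Qed.

Lemma lg_diff s r : 0 < s -> s <= r -> Rabs (lg s 1 - lg r 1) <= / s - / r.
Proof.
  intros Hs Hsr. assert (Hr : 0 < r) by lra.
  destruct (lg_spec s 1 Hs Rlt_0_1) as [_ H1]. destruct (lg_spec r 1 Hr Rlt_0_1) as [_ H2].
  assert (H := lim_rabs _ _ _ (lim_minus _ _ _ _ _ H1 H2)).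
  apply (lim_le_R (at_right 0) (fun b => Rabs (RInt (fG s) b 1 - RInt (fG r) b 1)) (fun b => (/ s + (- / s) * Rpower b s) - (/ r + (- / r) * Rpower b r))).
  - exists (mkposreal 1 Rlt_0_1). intros b Hb Hb0. simpl in Hb. change (Rabs (b - 0) < 1) in Hb.
    rewrite Rminus_0_r, Rabs_right in Hb by lra.
    assert (E : RInt (fun t => fG s t - fG r t) b 1 = RInt (fG s) b 1 - RInt (fG r) b 1).
    { apply is_RInt_unique. apply (@is_RInt_minus R_NormedModule (fG s) (fG r) b 1).
      apply (RInt_correct (V:=R_CompleteNormedModule)); apply exRI; lra.
      apply (RInt_correct (V:=R_CompleteNormedModule)); apply exRI; lra. }
    rewrite <- E.
    assert (HP := @is_RInt_minus R_NormedModule _ _ b 1 _ _ (is_RInt_pw s b 1 Hs Hb0 Rlt_0_1) (is_RInt_pw r b 1 Hr Hb0 Rlt_0_1)).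
    assert (Hex : ex_RInt (fun t => fG s t - fG r t) b 1) by (apply (@ex_RInt_minus R_NormedModule); apply exRI; lra).
    eapply Rle_trans.
    apply (norm_RInt_le (fun t => fG s t - fG r t) _ b 1 _ _ ltac:(lra)) with (2 := RInt_correct _ _ _ Hex) (3 := HP).
    + intros t Ht. change (Rabs (fG s t - fG r t) <= Rpower t (s - 1) - Rpower t (r - 1)).
      assert (Ht0 : 0 < t) by lra.
      assert (Hln : ln t <= 0) by (rewrite <- ln_1; apply ln_le; lra).
      assert (Hp : Rpower t (r - 1) <= Rpower t (s - 1)).
      { unfold Rpower. assert ((r - 1) * ln t <= (s - 1) * ln t) by nra.
        destruct H0 as [H0|H0]. left; apply exp_increasing; auto. rewrite H0; lra. }
      unfold fG. replace (Rpower t (s - 1) * exp (- t) - Rpower t (r - 1) * exp (- t)) with ((Rpower t (s - 1) - Rpower t (r - 1)) * exp (- t)) by ring.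
      rewrite Rabs_mult, Rabs_right by lra. rewrite Rabs_right by (left; apply exp_pos).
      assert (exp (- t) <= 1) by (rewrite <- exp_0; left; apply exp_increasing; lra).
      assert (0 < exp (- t)) by apply exp_pos. nra.
    + unfold minus, plus, opp; simpl. rewrite !Rpower_1_base. right. field. split; lra.
  - exact H.
  - assert (L1 := lim_affine (at_right 0) (fun b => Rpower b s) 0 (/ s) (- / s) (Rpower_lim0 s Hs)).
    assert (L2 := lim_affine (at_right 0) (fun b => Rpower b r) 0 (/ r) (- / r) (Rpower_lim0 r Hr)).
    assert (L := lim_minus _ _ _ _ _ L1 L2). rewrite !Rmult_0_r, !Rplus_0_r in L. exact L.
Qed.

Lemma lg_cont k : 0 < k -> filterlim (fun s => lg s 1) (locally k) (locally (lg k 1)).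
Proof.
  intros Hk. apply (squeeze0 _ _ (fun s => Rabs (/ s - / k))).
  - exists (mkposreal (k / 2) ltac:(lra)). intros s Hs. change (Rabs (s - k) < k / 2) in Hs.
    apply Rabs_lt_between in Hs.
    destruct (Rle_dec s k).
    + rewrite (Rabs_right (/ s - / k)). apply lg_diff; lra.
      apply Rle_ge. apply Rge_le, Rge_minus, Rle_ge. apply Rinv_le_contravar; lra.
    + rewrite Rabs_minus_sym, (Rabs_minus_sym (/ s)). rewrite (Rabs_right (/ k - / s)). apply lg_diff; lra.
      apply Rle_ge. apply Rge_le, Rge_minus, Rle_ge. apply Rinv_le_contravar; lra.
  - replace 0 with (Rabs (/ k - / k)) by (rewrite Rminus_diag_eq; auto; apply Rabs_R0).
    apply (lim_rabs (locally k)). apply (lim_minus (locally k) (fun s => / s) (fun _ => / k)). apply continuous_Rinv. lra. apply filterlim_const.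
Qed.

Lemma ug_cont m z : 0 < z -> filterlim (fun s => upper_gamma s z) (locally (INR (S m))) (locally (upper_gamma (INR (S m)) z)).
Proof.
  intros Hz. apply (squeeze0 _ _ (fun s => Rabs (s - INR (S m)) * Cug m z)).
  - exists (mkposreal (/ 2) ltac:(lra)). intros s Hs. change (Rabs (s - INR (S m)) < / 2) in Hs.
    apply ug_lip; auto. lra.
  - replace 0 with (Rabs (INR (S m) - INR (S m)) * Cug m z) by (rewrite Rminus_diag_eq, Rabs_R0; auto; ring).
    assert (H := lim_affine (locally (INR (S m))) (fun s => Rabs (s - INR (S m))) (Rabs (INR (S m) - INR (S m))) 0 (Cug m z)).
    eapply filterlim_ext; [| rewrite <- (Rplus_0_l (Rabs (INR (S m) - INR (S m)) * Cug m z)), Rmult_comm; apply H].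
    intro s. simpl. ring.
    apply (lim_rabs (locally (INR (S m)))). apply (lim_minus (locally (INR (S m))) (fun s => s) (fun _ => INR (S m))). apply filterlim_id. apply filterlim_const.
Qed.

Lemma Gamma_cont m : continuous Gamma_fun (INR (S m)).
Proof.
  assert (Hk : 0 < INR (S m)) by (apply lt_0_INR; lia).
  apply (filterlim_ext_loc (fun s => lg s 1 + upper_gamma s 1)).
  { exists (mkposreal _ Hk). intros s Hs. change (Rabs (s - INR (S m)) < INR (S m)) in Hs.
    apply Rabs_lt_between in Hs. rewrite (Gamma_split s 1); lra. }
  rewrite (Gamma_split _ 1 Hk Rlt_0_1).
  apply (@continuous_plus R_UniformSpace R_AbsRing R_NormedModule (fun s => lg s 1) (fun s => upper_gamma s 1)).
  apply lg_cont; auto. apply ug_cont; lra.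
Qed.

Lemma ratio_cont m y : 0 < y ->
  filterlim (fun e => upper_gamma (e * INR (S m)) y / Gamma_fun (e * INR (S m))) (Rbar_locally' 1) (locally (Em m y)).
Proof.
  intros Hy. set (k := INR (S m)).
  assert (Hk : 0 < k) by (apply lt_0_INR; lia).
  assert (Hc : continuous (fun s => upper_gamma s y / Gamma_fun s) k).
  { apply (@continuous_mult R_UniformSpace R_AbsRing (fun s => upper_gamma s y) (fun s => / Gamma_fun s)).
    apply ug_cont; auto. apply continuous_Rinv_comp. apply Gamma_cont.
    unfold k; rewrite Gamma_int. apply INR_fact_neq_0. }
  assert (Hv : upper_gamma k y / Gamma_fun k = Em m y).
  { unfold k. rewrite ug_int, Gamma_int by auto. field. apply INR_fact_neq_0. }
  unfold continuous in Hc. rewrite Hv in Hc.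
  apply (filterlim_comp _ _ _ (fun e => e * k) (fun s => upper_gamma s y / Gamma_fun s) _ (locally k)); auto.
  assert (Hm : continuous (fun e => e * k) 1).
  { apply exd_cont. exists (1 * k). apply is_derive_Reals. apply (derivable_pt_lim_scal_right (fun e => e)). apply derivable_pt_lim_id. }
  change (filterlim (fun e => e * k) (locally 1) (locally (1 * k))) in Hm. rewrite Rmult_1_l in Hm.
  apply (filterlim_filter_le_1 (F := locally 1)); auto.
  intros P HP. change (locally 1 (fun x => x <> 1 -> P x)). apply filter_imp with (2 := HP). auto.
Qed.

Lemma ratio_bound s y : 1 <= s -> 0 < y -> Rabs (upper_gamma s y / Gamma_fun s - 1) <= y * exp (y + 2) / s.
Proof.
  intros Hs Hy. rewrite (Gamma_split s y) by lra.
  assert (HA0 := lg_nonneg s y ltac:(lra) Hy). assert (HB0 := ug_pos s y ltac:(lra) Hy).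
  assert (HA := lg_le s y Hs Hy). assert (HB := ug_low s y Hs Hy).
  set (A := lg s y) in *. set (B := upper_gamma s y) in *.
  set (P := Rpower y (s - 1)). set (Q := Rpower (y + 1) (s - 1)).
  assert (HPy : Rpower y s = y * P).
  { unfold P. replace s with (1 + (s - 1)) at 1 by ring. rewrite Rpower_plus, Rpower_1; auto. }
  assert (HPQ : P <= Q) by (apply Rle_Rpower_l; lra).
  assert (HE : exp (- (y + 2)) * exp (y + 2) = 1) by (rewrite <- exp_plus; replace (- (y + 2) + (y + 2)) with 0 by ring; apply exp_0).
  assert (HQ : Q <= B * exp (y + 2)).
  { assert (H := exp_pos (y + 2)). fold Q in HB. 
    replace Q with (Q * exp (- (y + 2)) * exp (y + 2)) by (rewrite Rmult_assoc, HE; ring).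
    apply Rmult_le_compat_r; lra. }
  rewrite HPy in HA.
  replace (B / (A + B) - 1) with (- (A / (A + B))) by (field; lra).
  rewrite Rabs_Ropp, Rabs_right by (apply Rle_ge, Rdiv_le_0_compat; lra).
  assert (HAs : A * s <= y * P) by (apply (Rmult_le_reg_r (/ s)); [apply Rinv_0_lt_compat; lra | ]; replace (A * s * / s) with A by (field; lra); lra).
  assert (Hexp := exp_pos (y + 2)).
  apply (Rmult_le_reg_r ((A + B) * s)). nra.
  replace (A / (A + B) * ((A + B) * s)) with (A * s) by (field; lra).
  replace (y * exp (y + 2) / s * ((A + B) * s)) with (y * exp (y + 2) * (A + B)) by (field; lra).
  assert (y * P <= y * Q) by (apply Rmult_le_compat_l; lra).
  assert (y * Q <= y * (B * exp (y + 2))) by (apply Rmult_le_compat_l; lra).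
  assert (0 <= y * exp (y + 2) * A) by (apply Rmult_le_pos; [apply Rmult_le_pos|]; lra).
  nra.
Qed.

Lemma ratio_inf m y : 0 < y ->
  filterlim (fun e => upper_gamma (e * INR (S m)) y / Gamma_fun (e * INR (S m))) (Rbar_locally p_infty) (locally 1).
Proof.
  intros Hy. set (k := INR (S m)).
  assert (Hk : 1 <= k) by (unfold k; rewrite S_INR; generalize (pos_INR m); lra).
  apply (squeeze0 _ _ (fun e => (y * exp (y + 2) / k) / e)).
  - exists 1. intros e He.
    replace (y * exp (y + 2) / k / e) with (y * exp (y + 2) / (e * k)) by (field; lra).
    apply ratio_bound; auto. nra.
  - apply lim_C_over.
Qed.

Lemma exp_series y : is_series (fun n => y ^ n / INR (fact n)) (exp y).
Proof.
  eapply (is_series_ext (V := R_NormedModule)); [|apply (is_exp_Reals y)].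
  intro n. rewrite pow_n_pow. reflexivity.
Qed.

Lemma ex_exp_series y : ex_series (fun n => y ^ n / INR (fact n)).
Proof. eexists; apply exp_series. Qed.

Lemma Series_zero : Series (fun _ => 0) = 0.
Proof. unfold Series. rewrite (Lim_seq_ext _ (fun _ => 0)). rewrite Lim_seq_const. reflexivity. intro n. rewrite sum_n_Reals. induction n; simpl; auto. rewrite IHn. ring. Qed.

Lemma Series_nonneg a : (forall n, 0 <= a n) -> ex_series a -> 0 <= Series a.
Proof. intros H He. rewrite <- Series_zero. apply Series_le; auto. intro n; split; [lra | auto]. Qed.

Definition w (k : nat) (z : R) := (z / 2) ^ (2 * k) / (INR (fact k)) ^ 2.

Lemma w_nonneg k z : 0 <= w k z.
Proof.
  unfold w. apply Rdiv_le_0_compat. rewrite pow_mult. apply pow_le. apply pow2_ge_0.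
  apply pow_lt, lt_0_INR, lt_O_fact.
Qed.

Lemma w_mono k z Z : 0 <= z <= Z -> w k z <= w k Z.
Proof.
  intros H. unfold w, Rdiv. apply Rmult_le_compat_r.
  left; apply Rinv_0_lt_compat, pow_lt, lt_0_INR, lt_O_fact.
  apply pow_incr. lra.
Qed.

Lemma w_le_exp k z : w k z <= (z ^ 2 / 4) ^ k / INR (fact k).
Proof.
  unfold w. rewrite pow_mult. replace ((z / 2) ^ 2) with (z ^ 2 / 4) by field.
  assert (H0 : 0 <= (z ^ 2 / 4) ^ k) by (apply pow_le; assert (0 <= z ^ 2) by apply pow2_ge_0; lra).
  assert (H1 : 1 <= INR (fact k)) by (apply (le_INR 1); apply lt_O_fact).
  unfold Rdiv. apply Rmult_le_compat_l; auto.
  apply Rinv_le_contravar. lra. simpl. nra.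
Qed.

Lemma ex_w z : ex_series (fun k => w k z).
Proof.
  apply (@ex_series_le R_AbsRing R_CompleteNormedModule _ (fun k => (z ^ 2 / 4) ^ k / INR (fact k))).
  - intro n. change (Rabs (w n z) <= (z ^ 2 / 4) ^ n / INR (fact n)). rewrite Rabs_right by (apply Rle_ge, w_nonneg). apply w_le_exp.
  - apply ex_exp_series.
Qed.

Lemma I0_tail z Z N : 0 <= z <= Z ->
  Rabs (BesselI0 z - sum_f_R0 (fun k => w k z) N) <= BesselI0 Z - sum_f_R0 (fun k => w k Z) N.
Proof.
  intros Hz. unfold BesselI0. fold (w 0 z).
  change (Series (fun k => (z / 2) ^ (2 * k) / INR (fact k) ^ 2)) with (Series (fun k => w k z)).
  change (Series (fun k => (Z / 2) ^ (2 * k) / INR (fact k) ^ 2)) with (Series (fun k => w k Z)).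
  rewrite (Series_incr_n (fun k => w k z) (S N)), (Series_incr_n (fun k => w k Z) (S N)) by (lia || apply ex_w).
  change (Init.Nat.pred (S N)) with N.
  replace (sum_f_R0 (fun k => w k z) N + Series (fun k => w (S N + k)%nat z) - sum_f_R0 (fun k => w k z) N)
    with (Series (fun k => w (S N + k)%nat z)) by ring.
  replace (sum_f_R0 (fun k => w k Z) N + Series (fun k => w (S N + k)%nat Z) - sum_f_R0 (fun k => w k Z) N)
    with (Series (fun k => w (S N + k)%nat Z)) by ring.
  assert (Hs : ex_series (fun k => w (S N + k)%nat Z)) by (apply (ex_series_shift (fun k => w k Z)), ex_w).
  rewrite Rabs_right.
  - apply Series_le; auto. intro n; split. apply w_nonneg. apply w_mono; auto.
  - apply Rle_ge. rewrite <- Series_zero. apply Series_le.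
    intro n; split; [lra | apply w_nonneg]. apply (ex_series_shift (fun k => w k z)), ex_w.
Qed.

Lemma tl_lim Z : filterlim (fun N => BesselI0 Z - sum_f_R0 (fun k => w k Z) N) eventually (locally 0).
Proof.
  assert (H := Series_correct _ (ex_w Z)).
  assert (H2 : filterlim (fun N => sum_f_R0 (fun k => w k Z) N) eventually (locally (Series (fun k => w k Z)))).
  { eapply filterlim_ext; [|exact H]. intro n. simpl. apply sum_n_Reals. }
  assert (H3 := lim_minus eventually (fun _ => Series (fun k => w k Z)) _ _ _ (filterlim_const _) H2).
  rewrite Rminus_diag_eq in H3 by auto. exact H3.
Qed.

Definition q (m : nat) (t : R) := t * gp m (t ^ 2 / 2).

Lemma is_RInt_q m a b : is_RInt (q m) a b (INR (fact m) * (Em m (a ^ 2 / 2) - Em m (b ^ 2 / 2))).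
Proof.
  assert (Hf : INR (fact m) <> 0) by apply INR_fact_neq_0.
  replace (INR (fact m) * (Em m (a ^ 2 / 2) - Em m (b ^ 2 / 2))) with
    (minus ((fun u => - INR (fact m) * Em m (u ^ 2 / 2)) b) ((fun u => - INR (fact m) * Em m (u ^ 2 / 2)) a))
    by (unfold minus, plus, opp; simpl; ring).
  apply (@is_RInt_derive R_CompleteNormedModule (fun u => - INR (fact m) * Em m (u ^ 2 / 2))).
  - intros x _. apply is_derive_Reals.
    replace (q m x) with (- INR (fact m) * ((- gp m (x ^ 2 / 2) / INR (fact m)) * x)) by (unfold q; field; auto).
    apply derivable_pt_lim_scal.
    apply (derivable_pt_lim_comp (fun u => u ^ 2 / 2) (Em m)).
    + replace x with (INR 2 * x ^ 1 * / 2) at 2 by (simpl; field).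
      apply (derivable_pt_lim_scal_right (fun u => u ^ 2)). apply derivable_pt_lim_pow.
    + apply is_derive_Reals. apply is_derive_Em.
  - intros x _. unfold q. apply cont_mult. apply continuous_id.
    apply (continuous_comp (fun u => u ^ 2 / 2) (gp m)). 2: apply cont_gp.
    apply exd_cont. eexists. apply is_derive_Reals.
    apply (derivable_pt_lim_scal_right (fun u => u ^ 2)). apply derivable_pt_lim_pow.
Qed.

Section Marcum.
Variable y : R.
Hypothesis Hy : 0 < y.
Let a := sqrt (2 * y).

Lemma a_pos : 0 < a.
Proof. unfold a. apply sqrt_lt_R0. lra. Qed.

Lemma a_sq : a ^ 2 = 2 * y.
Proof. unfold a. apply pow2_sqrt. lra. Qed.

Definition hM (t : R) := t * exp (- (t ^ 2 + a ^ 2) / 2) * BesselI0 (a * t).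

Definition cM (m : nat) := exp (- y) * y ^ m / INR (fact m) ^ 2.

Lemma hm_eq m t : t * exp (- (t ^ 2 + a ^ 2) / 2) * w m (a * t) = cM m * q m t.
Proof.
  unfold w, cM, q, gp. rewrite a_sq.
  replace (- (t ^ 2 + 2 * y) / 2) with (- y + - (t ^ 2 / 2)) by field. rewrite exp_plus.
  rewrite pow_mult. replace ((a * t / 2) ^ 2) with (a ^ 2 * (t ^ 2 / 2) / 2) by field. rewrite a_sq.
  replace (2 * y * (t ^ 2 / 2) / 2) with (y * (t ^ 2 / 2)) by field.
  rewrite Rpow_mult_distr. field. apply INR_fact_neq_0.
Qed.

Definition VM (B : R) (m : nat) := cM m * (INR (fact m) * (Em m y - Em m (B ^ 2 / 2))).

Definition PM (N : nat) (t : R) := t * exp (- (t ^ 2 + a ^ 2) / 2) * sum_f_R0 (fun k => w k (a * t)) N.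

Lemma is_RInt_PM B N : is_RInt (PM N) a B (sum_f_R0 (VM B) N).
Proof.
  assert (Ha : a ^ 2 / 2 = y) by (rewrite a_sq; field).
  induction N.
  - assert (HI := @is_RInt_scal R_NormedModule (q 0) a B (cM 0) _ (is_RInt_q 0 a B)). rewrite Ha in HI.
    simpl sum_f_R0. unfold VM. eapply is_RInt_ext; [| exact HI].
    intros t _. unfold PM. simpl sum_f_R0. rewrite hm_eq. reflexivity.
  - assert (HI := is_RInt_lin (PM N) (q (S N)) a B _ _ 1 (cM (S N)) IHN (is_RInt_q (S N) a B)). rewrite Ha in HI.
    replace (sum_f_R0 (VM B) (S N)) with (1 * sum_f_R0 (VM B) N + cM (S N) * (INR (fact (S N)) * (Em (S N) y - Em (S N) (B ^ 2 / 2)))) by (change (sum_f_R0 (VM B) (S N)) with (sum_f_R0 (VM B) N + VM B (S N)); unfold VM; ring).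
    eapply is_RInt_ext; [| exact HI].
    intros t _. unfold PM. simpl sum_f_R0. rewrite Rmult_plus_distr_l, <- hm_eq. change (@eq R (1 * (t * exp (- (t ^ 2 + a ^ 2) / 2) * sum_f_R0 (fun k : nat => w k (a * t)) N) + t * exp (- (t ^ 2 + a ^ 2) / 2) * w (S N) (a * t)) (t * exp (- (t ^ 2 + a ^ 2) / 2) * sum_f_R0 (fun k : nat => w k (a * t)) N + t * exp (- (t ^ 2 + a ^ 2) / 2) * w (S N) (a * t))). ring.
Qed.

Lemma Em_le1 m u : 0 <= u -> Em m u <= 1.
Proof.
  intros Hu. unfold Em. assert (H := exp_ge_taylor u m Hu).
  assert (exp (- u) * exp u = 1) by (rewrite <- exp_plus; replace (- u + u) with 0 by ring; apply exp_0).
  assert (0 < exp (- u)) by apply exp_pos. nra.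
Qed.

Lemma Em_anti m u v : 0 <= u <= v -> 0 <= Em m u - Em m v.
Proof.
  intros H. assert (Hf : 0 < INR (fact m)) by apply lt_0_INR, lt_O_fact.
  assert (E := is_RInt_unique _ _ _ _ (is_RInt_gp m u v)).
  assert (0 <= RInt (gp m) u v).
  { apply RInt_ge_0. lra. eexists; apply is_RInt_gp. intros t Ht. unfold gp. apply Rmult_le_pos. apply pow_le; lra. left; apply exp_pos. }
  rewrite E in H0. apply (Rmult_le_reg_l (INR (fact m))); auto. lra.
Qed.

Lemma VM_bound B m : a <= B -> Rabs (VM B m) <= exp (- y) * (y ^ m / INR (fact m)).
Proof.
  intros HB. assert (Hf : 0 < INR (fact m)) by apply lt_0_INR, lt_O_fact.
  assert (HB2 : y <= B ^ 2 / 2).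
  { assert (a ^ 2 <= B ^ 2) by (apply pow_incr; generalize a_pos; lra). rewrite a_sq in H. lra. }
  assert (H1 := Em_anti m y (B ^ 2 / 2) ltac:(lra)).
  assert (H2 := Em_le1 m y ltac:(lra)). assert (H3 := Em_nonneg m (B ^ 2 / 2) ltac:(nra)).
  unfold VM, cM.
  replace (exp (- y) * y ^ m / INR (fact m) ^ 2 * (INR (fact m) * (Em m y - Em m (B ^ 2 / 2))))
    with (exp (- y) * (y ^ m / INR (fact m)) * (Em m y - Em m (B ^ 2 / 2))) by (field; lra).
  assert (0 <= exp (- y) * (y ^ m / INR (fact m))).
  { apply Rmult_le_pos. left; apply exp_pos. apply Rdiv_le_0_compat; auto. apply pow_le; lra. }
  rewrite Rabs_right by (apply Rle_ge, Rmult_le_pos; lra).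
  rewrite <- (Rmult_1_r (exp (- y) * (y ^ m / INR (fact m)))) at 2.
  apply Rmult_le_compat_l; lra.
Qed.

Lemma ex_bexp : ex_series (fun m => exp (- y) * (y ^ m / INR (fact m))).
Proof. apply (@ex_series_scal_l R_AbsRing R_NormedModule). apply ex_exp_series. Qed.

Lemma ex_VM B : a <= B -> ex_series (VM B).
Proof.
  intros HB. apply ex_series_Rabs. apply (@ex_series_le R_AbsRing R_CompleteNormedModule _ (fun m => exp (- y) * (y ^ m / INR (fact m)))).
  2: apply ex_bexp. intro n. change (Rabs (Rabs (VM B n)) <= exp (- y) * (y ^ n / INR (fact n))). rewrite Rabs_Rabsolu. apply VM_bound; auto.
Qed.

Lemma is_RInt_hM B : a < B -> is_RInt hM a B (Series (VM B)).
Proof.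
  intros HB. assert (Ha := a_pos).
  set (cl := fun t => Rmax a (Rmin B t)).
  assert (Hcl : forall t, a <= cl t <= B).
  { intro t. unfold cl. split. apply Rmax_l. apply Rmax_lub. lra. apply Rmin_l. }
  assert (Hcl2 : forall t, Rmin a B < t < Rmax a B -> cl t = t).
  { intros t Ht. rewrite Rmin_left, Rmax_right in Ht by lra. unfold cl. rewrite Rmin_right by lra. rewrite Rmax_right; lra. }
  destruct (filterlim_RInt (V := R_CompleteNormedModule) (fun N t => PM N (cl t)) a B eventually _ (fun t => hM (cl t)) (fun N => sum_f_R0 (VM B) N)) as [If [HIf1 HIf2]].
  - intro N. eapply is_RInt_ext; [|apply is_RInt_PM]. intros t Ht. rewrite Hcl2; auto.
  - apply filterlim_locally. intros eps.
    assert (Hd : 0 < eps / (B + 1)) by (apply Rdiv_lt_0_compat; [apply cond_pos | lra]).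
    assert (HT := proj1 (filterlim_locally _ _) (tl_lim (a * B)) (mkposreal _ Hd)).
    apply filter_imp with (2 := HT). intros N HN t.
    change (Rabs (PM N (cl t) - hM (cl t)) < eps).
    change (Rabs (BesselI0 (a * B) - sum_f_R0 (fun k => w k (a * B)) N - 0) < eps / (B + 1)) in HN.
    rewrite Rminus_0_r in HN.
    set (c := cl t). assert (Hc := Hcl t). fold c in Hc.
    unfold PM, hM. rewrite Rabs_minus_sym.
    replace (c * exp (- (c ^ 2 + a ^ 2) / 2) * BesselI0 (a * c) - c * exp (- (c ^ 2 + a ^ 2) / 2) * sum_f_R0 (fun k => w k (a * c)) N)
      with ((c * exp (- (c ^ 2 + a ^ 2) / 2)) * (BesselI0 (a * c) - sum_f_R0 (fun k => w k (a * c)) N)) by ring.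
    rewrite Rabs_mult.
    assert (HT2 := I0_tail (a * c) (a * B) N ltac:(split; nra)).
    assert (He : exp (- (c ^ 2 + a ^ 2) / 2) <= 1).
    { rewrite <- exp_0. assert (0 < c ^ 2 + a ^ 2) by nra. left; apply exp_increasing. lra. }
    assert (He0 := exp_pos (- (c ^ 2 + a ^ 2) / 2)).
    rewrite (Rabs_right (c * _)) by (apply Rle_ge, Rmult_le_pos; lra).
    apply Rabs_lt_between in HN.
    assert (0 <= Rabs (BesselI0 (a * c) - sum_f_R0 (fun k => w k (a * c)) N)) by apply Rabs_pos.
    apply (Rle_lt_trans _ (B * (eps / (B + 1)))).
    + apply Rmult_le_compat. apply Rmult_le_pos; lra. auto.
      rewrite <- (Rmult_1_r B). apply Rmult_le_compat; lra. lra.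
    + apply (Rmult_lt_reg_r (B + 1)). lra. replace (B * (eps / (B + 1)) * (B + 1)) with (B * eps) by (field; lra).
      assert (0 < eps) by apply cond_pos. nra.
  - assert (E : If = Series (VM B)).
    { apply (lim_unique_R eventually (fun N => sum_f_R0 (VM B) N)); auto.
      assert (H := Series_correct _ (ex_VM B ltac:(lra))). eapply filterlim_ext; [|exact H]. intro n; apply sum_n_Reals. }
    rewrite <- E. eapply is_RInt_ext; [|exact HIf2]. intros t Ht. pose proof (Hcl2 t Ht) as Hc. unfold cl in Hc |- *. cbv beta. rewrite Hc. reflexivity.
Qed.

Lemma lim_sq2 : filterlim (fun B => B ^ 2 / 2) (Rbar_locally p_infty) (Rbar_locally p_infty).
Proof.
  intros P [M HM]. exists (Rmax 1 (2 * Rabs M)). intros B HB. apply HM.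
  assert (1 < B) by (generalize (Rmax_l 1 (2 * Rabs M)); lra).
  assert (2 * Rabs M < B) by (generalize (Rmax_r 1 (2 * Rabs M)); lra).
  generalize (Rle_abs M). intros. nra.
Qed.

Lemma VM_lim m : filterlim (fun B => VM B m) (Rbar_locally p_infty) (locally (cM m * (INR (fact m) * Em m y))).
Proof.
  assert (H := filterlim_comp _ _ _ _ _ _ _ _ lim_sq2 (Em_lim m)).
  assert (H2 := lim_affine _ _ _ (cM m * INR (fact m) * Em m y) (- (cM m * INR (fact m))) H).
  eapply filterlim_ext. 2: { replace (cM m * (INR (fact m) * Em m y)) with (cM m * INR (fact m) * Em m y + - (cM m * INR (fact m)) * 0) by ring. exact H2. }
  intro B. unfold VM. simpl. ring.
Qed.

Lemma Marcum_val : MarcumQ1 a a = Series (fun m => cM m * (INR (fact m) * Em m y)).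
Proof.
  apply (is_RInt_gen_unique (V := R_CompleteNormedModule) (fun t => t * exp (- (t ^ 2 + a ^ 2) / 2) * BesselI0 (a * t))).
  apply (gen_upper _ a _ (fun B => Series (VM B))).
  - exists a. intros B HB. apply is_RInt_hM; auto.
  - apply (series_dct _ (fun B m => VM B m) _ (fun m => exp (- y) * (y ^ m / INR (fact m)))).
    apply ex_bexp. exists a. intros B HB n. apply VM_bound. lra.
    intro n. apply VM_lim.
Qed.

End Marcum.

Lemma exp_nat a n : exp (a * INR n) = exp a ^ n.
Proof.
  induction n. simpl. rewrite Rmult_0_r. apply exp_0.
  rewrite S_INR, Rmult_plus_distr_l, Rmult_1_r, exp_plus, IHn. simpl. ring.
Qed.

Lemma pmf_S lam n : pmf_Xstar lam (S n) = exp (- lam) * (lam ^ n / INR (fact n)).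
Proof. unfold pmf_Xstar. replace (S n - 1)%nat with n by lia. unfold Rdiv. ring. Qed.

Lemma ratio_01 s y : 0 < s -> 0 < y -> 0 <= upper_gamma s y / Gamma_fun s <= 1.
Proof.
  intros Hs Hy. rewrite (Gamma_split s y Hs Hy).
  assert (A := lg_nonneg s y Hs Hy). assert (B := ug_pos s y Hs Hy).
  split. apply Rdiv_le_0_compat; lra.
  apply (Rmult_le_reg_r (lg s y + upper_gamma s y)). lra.
  unfold Rdiv. rewrite Rmult_assoc, Rinv_l by lra. lra.
Qed.

Lemma sumexp_le y n : 0 <= y -> 0 <= sum_f_R0 (fun j => y ^ j / INR (fact j)) n <= exp y.
Proof.
  intros Hy. split. apply sum_nonneg. intro j. apply Rdiv_le_0_compat. apply pow_le; auto. apply lt_0_INR, lt_O_fact.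
  apply exp_ge_taylor; auto.
Qed.

Lemma ex_Sser y : 0 <= y -> ex_series (fun n => y ^ n / INR (fact n) * sum_f_R0 (fun j => y ^ j / INR (fact j)) n).
Proof.
  intros Hy. apply ex_series_Rabs.
  apply (@ex_series_le R_AbsRing R_CompleteNormedModule _ (fun n => exp y * (y ^ n / INR (fact n)))).
  - intro n. change (Rabs (Rabs (y ^ n / INR (fact n) * sum_f_R0 (fun j => y ^ j / INR (fact j)) n)) <= exp y * (y ^ n / INR (fact n))).
    rewrite Rabs_Rabsolu. assert (H1 := sumexp_le y n Hy).
    assert (0 <= y ^ n / INR (fact n)) by (apply Rdiv_le_0_compat; [apply pow_le; auto | apply lt_0_INR, lt_O_fact]).
    rewrite Rabs_right by (apply Rle_ge, Rmult_le_pos; lra). rewrite (Rmult_comm (exp y)). apply Rmult_le_compat_l; lra.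
  - apply (@ex_series_scal_l R_AbsRing R_NormedModule). apply ex_exp_series.
Qed.

Lemma main_lim {T} (F : (T -> Prop) -> Prop) {FF : ProperFilter F} lam x (hlam : 0 < lam) (hx : 0 < x) (e2s : T -> R) (r : nat -> R) :
  F (fun e => 0 < e2s e) ->
  (forall n, filterlim (fun e => upper_gamma (e2s e * INR (S n)) (lam * exp (- x)) / Gamma_fun (e2s e * INR (S n))) F (locally (r n))) ->
  filterlim (fun e => E_Xstar lam (fun X => exp (- x * X) * H lam x (e2s e * X))) F
    (locally (Series (fun n => pmf_Xstar lam (S n) * (exp (- x * INR (S n)) *
       (exp (- lam) / (1 - exp (- lam)) * (exp (lam * exp (- x)) * r n - 1)))))).
Proof.
  intros Hpos Hr. unfold E_Xstar.
  set (y := lam * exp (- x)).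
  assert (Hy : 0 < y) by (unfold y; apply Rmult_lt_0_compat; auto; apply exp_pos).
  set (c := exp (- lam) / (1 - exp (- lam))).
  assert (Hel : exp (- lam) < 1) by (rewrite <- exp_0; apply exp_increasing; lra).
  assert (Hc : 0 < c) by (unfold c; apply Rdiv_lt_0_compat; [apply exp_pos | lra]).
  assert (HH : forall s, H lam x s = c * (exp y * (upper_gamma s y / Gamma_fun s) - 1)).
  { intro s. unfold H. fold y. fold c. unfold Rdiv. ring. }
  apply (series_dct F (fun e n => pmf_Xstar lam (S n) * (exp (- x * INR (S n)) * H lam x (e2s e * INR (S n))))
           _ (fun n => exp (- lam) * (lam ^ n / INR (fact n)) * (c * (exp y + 1)))).
  - apply ex_series_ext with (fun n => scal (exp (- lam) * (c * (exp y + 1))) (lam ^ n / INR (fact n))).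
    intro n. unfold scal; simpl; unfold mult; simpl. ring.
    apply (@ex_series_scal_l R_AbsRing R_NormedModule). apply ex_exp_series.
  - apply filter_imp with (2 := Hpos). intros e He n.
    assert (Hs : 0 < e2s e * INR (S n)) by (apply Rmult_lt_0_compat; auto; apply lt_0_INR; lia).
    rewrite pmf_S, HH.
    destruct (ratio_01 _ y Hs Hy) as [R0 R1].
    assert (Hey := exp_pos y).
    assert (Hx1 : 0 < exp (- x * INR (S n)) <= 1).
    { split. apply exp_pos. rewrite <- exp_0. assert (0 < INR (S n)) by (apply lt_0_INR; lia).
      left; apply exp_increasing. nra. }
    assert (HP : 0 <= exp (- lam) * (lam ^ n / INR (fact n))).
    { apply Rmult_le_pos. left; apply exp_pos. apply Rdiv_le_0_compat. apply pow_le; lra. apply lt_0_INR, lt_O_fact. }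
    set (v := exp y * (upper_gamma (e2s e * INR (S n)) y / Gamma_fun (e2s e * INR (S n))) - 1).
    assert (Hv : Rabs v <= exp y + 1).
    { apply Rabs_le. unfold v. split; nra. }
    rewrite Rabs_mult, (Rabs_right (exp (- lam) * _)) by lra. rewrite Rabs_mult, (Rabs_right (exp (- x * INR (S n)))) by lra. rewrite Rabs_mult, (Rabs_right c) by lra.
    apply Rmult_le_compat_l; auto.
    rewrite <- (Rmult_1_l (c * (exp y + 1))).
    apply Rmult_le_compat. lra. apply Rmult_le_pos; [lra | apply Rabs_pos]. lra.
    apply Rmult_le_compat_l; lra.
  - intro n.
    apply (filterlim_ext (fun e => (pmf_Xstar lam (S n) * (exp (- x * INR (S n)) * (c * - 1))) +
        (pmf_Xstar lam (S n) * (exp (- x * INR (S n)) * c * exp y)) * (upper_gamma (e2s e * INR (S n)) y / Gamma_fun (e2s e * INR (S n))))).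
    { intro e. rewrite HH. ring. }
    assert (L := lim_affine F _ _ (pmf_Xstar lam (S n) * (exp (- x * INR (S n)) * (c * - 1))) (pmf_Xstar lam (S n) * (exp (- x * INR (S n)) * c * exp y)) (Hr n)).
    replace (pmf_Xstar lam (S n) * (exp (- x * INR (S n)) * (c * (exp y * r n - 1)))) with
      (pmf_Xstar lam (S n) * (exp (- x * INR (S n)) * (c * - 1)) + pmf_Xstar lam (S n) * (exp (- x * INR (S n)) * c * exp y) * r n) by ring.
    exact L.
Qed.

Lemma expS x n : exp (- x * INR (S n)) = exp (- x) * exp (- x) ^ n.
Proof. rewrite S_INR, Rmult_plus_distr_l, Rmult_1_r, exp_plus, exp_nat. ring. Qed.

Lemma term_eq lam x c r n :
  pmf_Xstar lam (S n) * (exp (- x * INR (S n)) * (c * (exp (lam * exp (- x)) * r - 1))) =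
  (exp (- lam) * exp (- x) * c) * ((lam * exp (- x)) ^ n / INR (fact n) * (exp (lam * exp (- x)) * r) - (lam * exp (- x)) ^ n / INR (fact n)).
Proof. rewrite pmf_S, expS, Rpow_mult_distr. field. apply INR_fact_neq_0. Qed.

Lemma Em_exp m y : exp y * Em m y = sum_f_R0 (fun j => y ^ j / INR (fact j)) m.
Proof. unfold Em. rewrite exp_Ropp. field. apply Rgt_not_eq, exp_pos. Qed.

Lemma Series_exp y : Series (fun n => y ^ n / INR (fact n)) = exp y.
Proof. apply is_series_unique. apply exp_series. Qed.

Theorem mainTheorem5 (lam x : R) (hlam : 0 < lam) (hx : 0 < x) :
  is_lim (fun eps => E_Xstar lam (fun X => exp (- x * X) * H lam x (eps * X))) 1
    (Finite (exp (-2 * lam) / (1 - exp (- lam)) * exp (lam * exp (- x) - x) *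
       (exp (lam * exp (- x)) *
          MarcumQ1 (sqrt (2 * lam * exp (- x))) (sqrt (2 * lam * exp (- x))) - 1)))
  /\
  is_lim (fun eps => E_Xstar lam (fun X => exp (- x * X) * H lam x (eps * X))) p_infty
    (Finite (exp (-2 * lam) / (1 - exp (- lam)) * exp (lam * exp (- x) - x) *
       (exp (lam * exp (- x)) - 1))).
Proof.
  assert (Hy : 0 < lam * exp (- x)) by (apply Rmult_lt_0_compat; auto; apply exp_pos).
  assert (Hel : exp (- lam) < 1) by (rewrite <- exp_0; apply exp_increasing; lra).
  assert (Hey := exp_pos (lam * exp (- x))).
  assert (E2 : exp (-2 * lam) = exp (- lam) * exp (- lam)) by (rewrite <- exp_plus; f_equal; ring).
  assert (E3 : exp (lam * exp (- x) - x) = exp (lam * exp (- x)) * exp (- x)) by (rewrite <- exp_plus; f_equal; ring).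
  set (c := exp (- lam) / (1 - exp (- lam))).
  split.
  - unfold is_lim.
    assert (M := main_lim (Rbar_locally' 1) lam x hlam hx (fun e => e) (fun n => Em n (lam * exp (- x)))).
    change (Rbar_locally (Finite ?L)) with (locally L).
    match goal with |- filterlim _ _ (locally ?L) => replace L with
      (Series (fun n => pmf_Xstar lam (S n) * (exp (- x * INR (S n)) * (exp (- lam) / (1 - exp (- lam)) * (exp (lam * exp (- x)) * Em n (lam * exp (- x)) - 1))))) end.
    + apply M.
      * exists (mkposreal (/ 2) ltac:(lra)). intros e He _. change (Rabs (e - 1) < / 2) in He. apply Rabs_lt_between in He. lra.
      * intro n. apply ratio_cont; auto.
    + rewrite (Series_ext _ (fun n => (exp (- lam) * exp (- x) * c) * ((lam * exp (- x)) ^ n / INR (fact n) * sum_f_R0 (fun j => (lam * exp (- x)) ^ j / INR (fact j)) n - (lam * exp (- x)) ^ n / INR (fact n)))).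
      2: { intro n. rewrite term_eq, Em_exp. reflexivity. }
      rewrite Series_scal_l, Series_minus, Series_exp.
      2: apply ex_Sser; lra. 2: apply ex_exp_series.
      replace (2 * lam * exp (- x)) with (2 * (lam * exp (- x))) by ring.
      rewrite Marcum_val by auto.
      rewrite (Series_ext (fun m => cM (lam * exp (- x)) m * (INR (fact m) * Em m (lam * exp (- x)))) (fun n => (exp (- (lam * exp (- x))) * exp (- (lam * exp (- x)))) * ((lam * exp (- x)) ^ n / INR (fact n) * sum_f_R0 (fun j => (lam * exp (- x)) ^ j / INR (fact j)) n))).
      2: { intro n. unfold cM, Em. field. apply INR_fact_neq_0. }
      rewrite Series_scal_l, E2, E3. unfold c. rewrite !exp_Ropp.
      assert (exp lam > 1) by (rewrite <- exp_0; apply exp_increasing; lra).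
      field. repeat split; try (apply Rgt_not_eq, exp_pos); lra.
  - unfold is_lim.
    assert (M := main_lim (Rbar_locally p_infty) lam x hlam hx (fun e => e) (fun n => 1)).
    change (Rbar_locally (Finite ?L)) with (locally L).
    match goal with |- filterlim _ _ (locally ?L) => replace L with
      (Series (fun n => pmf_Xstar lam (S n) * (exp (- x * INR (S n)) * (exp (- lam) / (1 - exp (- lam)) * (exp (lam * exp (- x)) * 1 - 1))))) end.
    + apply M.
      * exists 0. intros e He. exact He.
      * intro n. apply ratio_inf; auto.
    + rewrite (Series_ext (fun n => pmf_Xstar lam (S n) * (exp (- x * INR (S n)) * (exp (- lam) / (1 - exp (- lam)) * (exp (lam * exp (- x)) * 1 - 1)))) (fun n => (exp (- lam) * exp (- x) * c * (exp (lam * exp (- x)) - 1)) * ((lam * exp (- x)) ^ n / INR (fact n)))).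
      2: { intro n. rewrite term_eq. unfold c. ring. }
      rewrite Series_scal_l, Series_exp, E2, E3. unfold c. field. lra.
Qed.
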